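(* Let $f,g_1,\ldots,g_m\in\mathbb R[\mathbf x]$, $\mathbf x=(x_1,\ldots,x_n)$, satisfy the Sparsity Assumption and the Compactness/Generation Assumption (a) below, and let $\mathbf K=\{\mathbf x\in\mathbb R^n: 0\le g_j(\mathbf x)\le 1,\ j=1,\ldots,m\}$. If $f(\mathbf x)>0$ for all $\mathbf x\in\mathbf K$, then there exist polynomials $f^\ell\in\mathbb R[\mathbf x;I_\ell]$, $\ell=1,\ldots,p$, with $f=\sum_{\ell=1}^p f^\ell$, and for each $\ell$ finitely many positive reals $c^\ell_{\alpha\beta}$, $(\alpha,\beta)\in N^\ell$, such that \[ f^\ell=\sum_{(\alpha,\beta)\in N^\ell} c^\ell_{\alpha\beta}\,h_{\alpha\beta},\qquad \ell=1,\ldots,p. \]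
   Context: For $I\subseteq\{1,\ldots,n\}$, $\mathbb R[\mathbf x;I]$ denotes the subring of $\mathbb R[\mathbf x]$ of polynomials in the variables $\{x_i:i\in I\}$ only. For $\alpha,\beta\in\mathbb N_0^m$, $h_{\alpha\beta}:=\prod_{j=1}^m g_j^{\alpha_j}(1-g_j)^{\beta_j}$. For $\alpha\in\mathbb N_0^m$, $\mathrm{supp}(\alpha)=\{j:\alpha_j\neq 0\}$. Sparsity Assumption: there are $p\in\mathbb N$ and sets $I_\ell\subseteq\{1,\ldots,n\}$, $J_\ell\subseteq\{1,\ldots,m\}$ ($\ell=1,\ldots,p$) such that: $f=\sum_{\ell=1}^p f^\ell$ for some $f^\ell\in\mathbb R[\mathbf x;I_\ell]$; $g_j\in\mathbb R[\mathbf x;I_\ell]$ for all $j\in J_\ell$; $\bigcup_\ell I_\ell=\{1,\ldots,n\}$; $\bigcup_\ell J_\ell=\{1,\ldots,m\}$; and (running intersection property) for every $\ell=1,\ldots,p-1$ there is $s\le \ell$ with $I_{\ell+1}\cap\bigcup_{r=1}^{\ell}I_r\subseteq I_s$. With $n_\ell=|I_\ell|$, let $\mathbf K_\ell=\{\mathbf z\in\mathbb R^{n_\ell}:0\le g_j(\mathbf z)\le 1,\ j\in J_\ell\}$ (each $g_j$, $j\in J_\ell$, viewed as a function of the variables indexed by $I_\ell$). Compactness/Generation Assumption (a): for each $\ell$, $\mathbf K_\ell$ is compact and the polynomials $1$ and $(g_j)_{j\in J_\ell}$ generate $\mathbb R[\mathbf x;I_\ell]$ as an $\mathbb R$-algebra.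 $N^\ell:=\{(\alpha,\beta)\in\mathbb N_0^m\times\mathbb N_0^m:\mathrm{supp}(\alpha)\cup\mathrm{supp}(\beta)\subseteq J_\ell\}$. *)

(* Defs.v *)
(* classical reals. Multivariate polynomials are represented as
   polynomial functions R^n -> R (points are nat -> R, variables x_0..x_{n-1}). *)
From Stdlib Require Import Reals List.
Open Scope R_scope.

Definition point := nat -> R.
Definition fn := point -> R.

Inductive poly_in (I : nat -> Prop) : fn -> Prop :=
  | pi_const (c : R) : poly_in I (fun _ => c)
  | pi_var (i : nat) : I i -> poly_in I (fun x => x i)
  | pi_add (P Q : fn) : poly_in I P -> poly_in I Q -> poly_in I (fun x => P x + Q x)
  | pi_mul (P Q : fn) : poly_in I P -> poly_in I Q -> poly_in I (fun x => P x * Q x).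

Inductive alg_gen (S : fn -> Prop) : fn -> Prop :=
  | ag_const (c : R) : alg_gen S (fun _ => c)
  | ag_gen (P : fn) : S P -> alg_gen S P
  | ag_add (P Q : fn) : alg_gen S P -> alg_gen S Q -> alg_gen S (fun x => P x + Q x)
  | ag_mul (P Q : fn) : alg_gen S P -> alg_gen S Q -> alg_gen S (fun x => P x * Q x).

Fixpoint hprod (g : nat -> fn) (alpha beta : nat -> nat) (m : nat) (x : point) : R :=
  match m with
  | O => 1
  | S k => hprod g alpha beta k x * (g k x ^ alpha k * (1 - g k x) ^ beta k)
  end.
Definition h (m : nat) (g : nat -> fn) (alpha beta : nat -> nat) : fn :=
  fun x => hprod g alpha beta m x.

(* Compactness of a subset of R^{n_l}, the coordinates being indexed by I
   (S must only depend on the coordinates in I): bounded and closed (Heine-Borel). *)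
Definition compact_in (I : nat -> Prop) (S : point -> Prop) : Prop :=
  (exists M : R, forall x, S x -> forall i, I i -> Rabs (x i) <= M) /\
  (forall (u : nat -> point) (x : point),
     (forall k, S (u k)) ->
     (forall i, I i -> Un_cv (fun k => u k i) (x i)) -> S x).

Definition lin_comb (m : nat) (g : nat -> fn)
  (l : list ((nat -> nat) * (nat -> nat) * R)) : fn :=
  fun x => fold_right (fun t acc => let '(a, b, c) := t in c * h m g a b x + acc) 0 l.

Fixpoint sum_upto (F : nat -> R) (p : nat) : R :=
  match p with O => 0 | S k => sum_upto F k + F k end.

(* Main.v *)
Require Import Defs.
From Stdlib Require Import Reals List Lra Lia Psatz Classical ClassicalEpsilon FunctionalExtensionality Arith FinFun Rtopology.
Open Scope R_scope.

Lemma pi_ext (I : nat -> Prop) (P Q : fn) : poly_in I P -> (forall x, P x = Q x) -> poly_in I Q.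
Proof. intros H E. replace Q with P; [exact H|]. apply functional_extensionality; exact E. Qed.

Lemma pi_mono (I I' : nat -> Prop) (P : fn) : (forall i, I i -> I' i) -> poly_in I P -> poly_in I' P.
Proof. intros HI H; induction H; constructor; auto. Qed.

Lemma pi_dep (I : nat -> Prop) (P : fn) : poly_in I P ->
  forall x x', (forall i, I i -> x i = x' i) -> P x = P x'.
Proof. intros H; induction H; intros x x' E; simpl; auto; try (rewrite (IHpoly_in1 x x' E), (IHpoly_in2 x x' E); reflexivity). Qed.

Lemma pi_scal (I : nat -> Prop) (P : fn) c : poly_in I P -> poly_in I (fun x => c * P x).
Proof. intros H. apply (pi_mul I (fun _ => c) P); [constructor|auto]. Qed.

Lemma pi_sub (I : nat -> Prop) (P Q : fn) : poly_in I P -> poly_in I Q -> poly_in I (fun x => P x - Q x).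
Proof. intros HP HQ. apply pi_ext with (fun x => P x + (-1) * Q x).
 - apply pi_add; auto. apply pi_scal; auto.
 - intros; ring. Qed.

Lemma pi_pow (I : nat -> Prop) (P : fn) k : poly_in I P -> poly_in I (fun x => P x ^ k).
Proof. intros H; induction k; simpl.
 - apply pi_const.
 - apply (pi_mul I P (fun x => P x ^ k)); auto. Qed.

Lemma pi_bounded (I : nat -> Prop) (P : fn) : poly_in I P -> forall Rb,
  exists M, forall x, (forall i, I i -> Rabs (x i) <= Rb) -> Rabs (P x) <= M.
Proof. intros H Rb; induction H.
 - exists (Rabs c); intros; lra.
 - exists Rb; intros x Hx; auto.
 - destruct IHpoly_in1 as [M1 H1], IHpoly_in2 as [M2 H2]. exists (M1 + M2); intros x Hx.
   specialize (H1 x Hx); specialize (H2 x Hx). pose proof (Rabs_triang (P x) (Q x)); lra.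
 - destruct IHpoly_in1 as [M1 H1], IHpoly_in2 as [M2 H2]. exists (M1 * M2); intros x Hx.
   specialize (H1 x Hx); specialize (H2 x Hx). rewrite Rabs_mult.
   apply Rmult_le_compat; auto; apply Rabs_pos. Qed.

Lemma cv_const c : Un_cv (fun _ => c) c.
Proof. intros e He; exists 0%nat; intros; unfold R_dist; rewrite Rminus_diag, Rabs_R0; lra. Qed.

Lemma pi_cont (I : nat -> Prop) (P : fn) : poly_in I P -> forall (u : nat -> point) x,
  (forall i, I i -> Un_cv (fun k => u k i) (x i)) -> Un_cv (fun k => P (u k)) (P x).
Proof. intros H u x Hu; induction H.
 - apply cv_const.
 - auto.
 - apply (CV_plus (fun k => P (u k)) (fun k => Q (u k))); auto.
 - apply (CV_mult (fun k => P (u k)) (fun k => Q (u k))); auto. Qed.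

Lemma pi_subst (I J : nat -> Prop) (P : fn) (s : nat -> fn) : poly_in I P ->
  (forall i, I i -> poly_in J (s i)) -> poly_in J (fun y => P (fun i => s i y)).
Proof. intros H Hs; induction H.
 - apply pi_const.
 - auto.
 - apply (pi_add J (fun y => P (fun i => s i y)) (fun y => Q (fun i => s i y))); auto.
 - apply (pi_mul J (fun y => P (fun i => s i y)) (fun y => Q (fun i => s i y))); auto. Qed.

Lemma ag_to_pi (g : nat -> fn) (Jp : nat -> Prop) (P : fn) :
  alg_gen (fun q => exists j, Jp j /\ q = g j) P ->
  exists Pt, poly_in Jp Pt /\ forall x, P x = Pt (fun j => g j x).
Proof. intros H; induction H.
 - exists (fun _ => c); split; [constructor|auto].
 - destruct H as [j [Hj ->]]. exists (fun y => y j); split; [constructor; auto|auto].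
 - destruct IHalg_gen1 as [P1 [H1 E1]], IHalg_gen2 as [P2 [H2 E2]].
   exists (fun y => P1 y + P2 y); split; [constructor; auto|]. intros; rewrite E1, E2; auto.
 - destruct IHalg_gen1 as [P1 [H1 E1]], IHalg_gen2 as [P2 [H2 E2]].
   exists (fun y => P1 y * P2 y); split; [constructor; auto|]. intros; rewrite E1, E2; auto.
Qed.

Definition lsum {A} (l : list A) (f : A -> R) : R := fold_right (fun a acc => f a + acc) 0 l.
Fixpoint prodn (f : nat -> R) (n : nat) : R :=
  match n with O => 1 | S k => prodn f k * f k end.

Lemma lsum_app {A} (l1 l2 : list A) f : lsum (l1 ++ l2) f = lsum l1 f + lsum l2 f.
Proof. induction l1; simpl; [ring|rewrite IHl1; ring]. Qed.
Lemma lsum_ext {A} (l : list A) f f' : (forall a, In a l -> f a = f' a) -> lsum l f = lsum l f'.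
Proof. induction l; simpl; intros H; auto. rewrite H, IHl; auto. Qed.
Lemma lsum_plus {A} (l : list A) f f' : lsum l (fun a => f a + f' a) = lsum l f + lsum l f'.
Proof. induction l; simpl; [ring|rewrite IHl; ring]. Qed.
Lemma lsum_scal {A} (l : list A) f c : lsum l (fun a => c * f a) = c * lsum l f.
Proof. induction l; simpl; [ring|rewrite IHl; ring]. Qed.
Lemma lsum_le {A} (l : list A) f f' : (forall a, In a l -> f a <= f' a) -> lsum l f <= lsum l f'.
Proof. induction l; simpl; intros H; [lra|]. pose proof (H a (or_introl eq_refl)). pose proof (IHl (fun b Hb => H b (or_intror Hb))). lra. Qed.
Lemma lsum_map {A B} (l : list A) (g : A -> B) f : lsum (map g l) f = lsum l (fun a => f (g a)).
Proof. induction l; simpl; auto. rewrite IHl; auto. Qed.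
Lemma lsum_flat_map {A B} (l : list A) (g : A -> list B) f :
  lsum (flat_map g l) f = lsum l (fun a => lsum (g a) f).
Proof. induction l; simpl; auto. rewrite lsum_app, IHl; auto. Qed.
Lemma lsum_swap {A B} (l1 : list A) (l2 : list B) F :
  lsum l1 (fun a => lsum l2 (fun b => F a b)) = lsum l2 (fun b => lsum l1 (fun a => F a b)).
Proof. induction l1; simpl.
 - induction l2; simpl; auto. rewrite <- IHl2; ring.
 - rewrite IHl1, <- lsum_plus; auto. Qed.
Lemma lsum_zero {A} (l : list A) : lsum l (fun _ => 0) = 0.
Proof. induction l; simpl; auto; rewrite IHl; ring. Qed.
Lemma lsum_nonneg {A} (l : list A) f : (forall a, In a l -> 0 <= f a) -> 0 <= lsum l f.
Proof. intros H. rewrite <- (lsum_zero l). apply lsum_le; auto. Qed.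
Lemma lsum_abs {A} (l : list A) f : Rabs (lsum l f) <= lsum l (fun a => Rabs (f a)).
Proof. induction l; simpl. rewrite Rabs_R0; lra. pose proof (Rabs_triang (f a) (lsum l f)); lra. Qed.

Lemma prodn_ext f f' n : (forall k, (k < n)%nat -> f k = f' k) -> prodn f n = prodn f' n.
Proof. induction n; simpl; intros H; auto. rewrite IHn, H; auto. Qed.
Lemma prodn_mult f f' n : prodn (fun k => f k * f' k) n = prodn f n * prodn f' n.
Proof. induction n; simpl; [ring|rewrite IHn; ring]. Qed.
Lemma prodn_nonneg f n : (forall k, (k < n)%nat -> 0 <= f k) -> 0 <= prodn f n.
Proof. induction n; simpl; intros H; [lra|]. apply Rmult_le_pos; auto. Qed.
Lemma prodn_pos f n : (forall k, (k < n)%nat -> 0 < f k) -> 0 < prodn f n.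
Proof. induction n; simpl; intros H; [lra|]. apply Rmult_lt_0_compat; auto. Qed.
Lemma prodn_le1 f n : (forall k, (k < n)%nat -> 0 <= f k <= 1) -> 0 <= prodn f n <= 1.
Proof. induction n; simpl; intros H; [lra|]. destruct IHn as [A B]; auto.
 destruct (H n) as [C D]; auto. split; [nra|nra]. Qed.
Lemma prodn_one f n : (forall k, (k < n)%nat -> f k = 1) -> prodn f n = 1.
Proof. induction n; simpl; intros H; auto. rewrite IHn, H; auto; ring. Qed.
Lemma prodn_single f n k c : (k < n)%nat ->
  prodn (fun k' => if Nat.eq_dec k' k then c * f k' else f k') n = c * prodn f n.
Proof. induction n; intros Hk; [lia|]. simpl. destruct (Nat.eq_dec n k).
 - subst k. rewrite (prodn_ext _ f); [ring|]. intros k' Hk'. destruct (Nat.eq_dec k' n); [lia|auto].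
 - rewrite IHn; [ring|lia]. Qed.
Lemma prodn_diff a b n : (forall k, (k < n)%nat -> 0 <= a k <= 1 /\ 0 <= b k <= 1) ->
  Rabs (prodn a n - prodn b n) <= sum_upto (fun k => Rabs (a k - b k)) n.
Proof. induction n; simpl; intros H. rewrite Rminus_diag, Rabs_R0; lra.
 assert (IH := IHn (fun k Hk => H k ltac:(lia))).
 destruct (H n) as [[Ha1 Ha2] [Hb1 Hb2]]; [lia|].
 assert (Pa := prodn_le1 a n (fun k Hk => proj1 (H k ltac:(lia)))).
 assert (Pb := prodn_le1 b n (fun k Hk => proj2 (H k ltac:(lia)))).
 replace (prodn a n * a n - prodn b n * b n) with ((prodn a n - prodn b n) * a n + prodn b n * (a n - b n)) by ring.
 eapply Rle_trans; [apply Rabs_triang|]. rewrite !Rabs_mult.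
 rewrite (Rabs_right (a n)), (Rabs_right (prodn b n)) by lra.
 pose proof (Rabs_pos (prodn a n - prodn b n)). pose proof (Rabs_pos (a n - b n)). nra. Qed.

Lemma sum_upto_le F F' n : (forall k, (k < n)%nat -> F k <= F' k) -> sum_upto F n <= sum_upto F' n.
Proof. induction n; simpl; intros H; [lra|]. pose proof (H n ltac:(lia)). pose proof (IHn (fun k Hk => H k ltac:(lia))). lra. Qed.
Lemma sum_upto_nonneg F n : (forall k, (k < n)%nat -> 0 <= F k) -> 0 <= sum_upto F n.
Proof. induction n; simpl; intros H; [lra|]. pose proof (H n ltac:(lia)). pose proof (IHn (fun k Hk => H k ltac:(lia))). lra. Qed.
Lemma sum_upto_term F n k : (k < n)%nat -> (forall k, (k < n)%nat -> 0 <= F k) -> F k <= sum_upto F n.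
Proof. induction n; simpl; intros Hk H; [lia|]. destruct (Nat.eq_dec k n).
 - subst. pose proof (sum_upto_nonneg F n (fun k Hk => H k ltac:(lia))); lra.
 - pose proof (H n ltac:(lia)). pose proof (IHn ltac:(lia) (fun k Hk => H k ltac:(lia))). lra. Qed.
Lemma sum_upto_const c n : sum_upto (fun _ => c) n = INR n * c.
Proof. induction n; simpl sum_upto; [simpl; ring|]. rewrite IHn, S_INR; ring. Qed.
Lemma sum_upto_ext F F' n : (forall k, (k < n)%nat -> F k = F' k) -> sum_upto F n = sum_upto F' n.
Proof. induction n; simpl; intros H; auto. rewrite IHn, H; auto. Qed.
Lemma lsum_sum_upto {A} (l : list A) (F : A -> nat -> R) n :
  lsum l (fun a => sum_upto (F a) n) = sum_upto (fun k => lsum l (fun a => F a k)) n.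
Proof. induction n; simpl. apply lsum_zero. rewrite lsum_plus, IHn; auto. Qed.
Lemma sum_upto_plus F F' n : sum_upto (fun k => F k + F' k) n = sum_upto F n + sum_upto F' n.
Proof. induction n; simpl; [ring|rewrite IHn; ring]. Qed.

Lemma pi_prodn (I : nat -> Prop) (F : nat -> fn) n : (forall k, (k < n)%nat -> poly_in I (F k)) ->
  poly_in I (fun x => prodn (fun k => F k x) n).
Proof. induction n; intros H; simpl. apply pi_const.
 apply (pi_mul I (fun x => prodn (fun k => F k x) n) (F n)); auto. Qed.
Lemma pi_lsum {A} (I : nat -> Prop) (l : list A) (F : A -> fn) : (forall a, In a l -> poly_in I (F a)) ->
  poly_in I (fun x => lsum l (fun a => F a x)).
Proof. induction l; intros H; simpl. apply pi_const.
 apply (pi_add I (F a) (fun x => lsum l (fun a => F a x))); auto with datatypes. Qed.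
Lemma pi_sum_upto (I : nat -> Prop) (F : nat -> fn) n : (forall k, (k < n)%nat -> poly_in I (F k)) ->
  poly_in I (fun x => sum_upto (fun k => F k x) n).
Proof. induction n; intros H; simpl. apply pi_const.
 apply (pi_add I (fun x => sum_upto (fun k => F k x) n) (F n)); auto. Qed.
Lemma abs_le_inv a b : Rabs a <= b -> - b <= a <= b.
Proof. intros H. pose proof (Rle_abs a). pose proof (Rle_abs (- a)). rewrite Rabs_Ropp in H1. lra. Qed.
Lemma sum_upto_scal F c n : sum_upto (fun k => c * F k) n = c * sum_upto F n.
Proof. induction n; simpl; [ring|rewrite IHn; ring]. Qed.

Definition upd (q : nat -> nat) (k b : nat) : nat -> nat := fun i => if Nat.eq_dec i k then b else q i.
Fixpoint gridn (Nv : nat -> nat) (n : nat) : list (nat -> nat) :=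
  match n with
  | O => (fun _ => 0%nat) :: nil
  | S k => flat_map (fun q => map (fun b => upd q k b) (seq 0 (S (Nv k)))) (gridn Nv k)
  end.

Lemma grid_prop Nv n q : In q (gridn Nv n) ->
  (forall k, (k < n)%nat -> (q k <= Nv k)%nat) /\ (forall k, (n <= k)%nat -> q k = 0%nat).
Proof. revert q; induction n; intros q Hq; cbn [gridn] in Hq.
 - destruct Hq as [<-|[]]. split; intros; [lia|auto].
 - apply in_flat_map in Hq. destruct Hq as [q0 [Hq0 Hb]]. apply in_map_iff in Hb.
   destruct Hb as [b [<- Hb]]. apply in_seq in Hb. destruct (IHn q0 Hq0) as [A B].
   unfold upd; split; intros k Hk; destruct (Nat.eq_dec k n); try (subst k; lia); auto.
   apply A; lia. apply B; lia. Qed.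

Lemma grid_sum_prod Nv n (f : nat -> nat -> R) :
  lsum (gridn Nv n) (fun q => prodn (fun k => f k (q k)) n) = prodn (fun k => lsum (seq 0 (S (Nv k))) (f k)) n.
Proof. induction n; cbn [gridn prodn]. simpl; ring.
 rewrite lsum_flat_map. rewrite <- IHn. rewrite Rmult_comm, <- lsum_scal. apply lsum_ext; intros q Hq.
 rewrite lsum_map. rewrite Rmult_comm, <- lsum_scal. apply lsum_ext; intros b Hb.
 unfold upd. destruct (Nat.eq_dec n n); [|lia]. rewrite (prodn_ext _ (fun k => f k (q k))); [ring|].
 intros k Hk. destruct (Nat.eq_dec k n); [lia|auto]. Qed.

Lemma grid_NoDup Nv n : NoDup (gridn Nv n).
Proof. induction n; cbn [gridn]. constructor; [simpl; tauto|constructor].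
 assert (H : forall l, (forall q, In q l -> In q (gridn Nv n)) -> NoDup l ->
   NoDup (flat_map (fun q => map (fun b => upd q n b) (seq 0 (S (Nv n)))) l)).
 { induction l; intros Hl Hd; cbn [flat_map]. constructor. inversion Hd; subst.
   apply NoDup_app.
   - apply Injective_map_NoDup; [|apply seq_NoDup]. intros b1 b2 E.
     assert (E2 := f_equal (fun q => q n) E). unfold upd in E2; simpl in E2.
     destruct (Nat.eq_dec n n); [auto|lia].
   - apply IHl; auto with datatypes.
   - intros x Hx Hx2. apply in_map_iff in Hx. destruct Hx as [b [<- _]].
     apply in_flat_map in Hx2. destruct Hx2 as [q' [Hq' Hb']]. apply in_map_iff in Hb'.
     destruct Hb' as [b' [E _]]. apply H1.
     assert (Ha := grid_prop Nv n a (Hl a (or_introl eq_refl))).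
     assert (Hq'g := grid_prop Nv n q' (Hl q' (or_intror Hq'))).
     replace a with q'; [auto|]. apply functional_extensionality; intros k.
     assert (Ek := f_equal (fun q => q k) E). unfold upd in Ek; simpl in Ek.
     destruct (Nat.eq_dec k n); [subst k; rewrite (proj2 Ha), (proj2 Hq'g); auto|auto]. }
 apply H; auto. Qed.

Definition B (N b : nat) (t : R) : R := C N b * t ^ b * (1 - t) ^ (N - b).
Definition rr (N a b : nat) : R := prodn (fun i => (INR b - INR i) / (INR N - INR i)) a.
Definition ff (b a : nat) : R := prodn (fun i => INR b - INR i) a.

Lemma ff_fact b a : (a <= b)%nat -> ff b a = INR (fact b) / INR (fact (b - a)).
Proof. induction a; intros H; unfold ff in *; simpl prodn.
 - rewrite Nat.sub_0_r. field. apply not_0_INR, fact_neq_0.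
 - rewrite IHa by lia. replace (b - a)%nat with (S (b - S a)) by lia. rewrite fact_simpl, mult_INR.
   replace (INR (S (b - S a))) with (INR b - INR a) by (rewrite <- minus_INR by lia; f_equal; lia).
   assert (0 < INR (fact (b - S a))) by apply INR_fact_lt_0.
   assert (INR a < INR b) by (apply lt_INR; lia). field; lra. Qed.

Lemma prodn_div f g n : (forall k, (k < n)%nat -> g k <> 0) ->
  prodn (fun k => f k / g k) n = prodn f n / prodn g n.
Proof. induction n; simpl; intros H. field. rewrite IHn by auto.
 assert (prodn g n <> 0). { clear IHn. induction n; simpl. lra. apply Rmult_integral_contrapositive; split; auto. }
 field; split; auto. Qed.

Lemma rr_ff N a b : (a <= N)%nat -> rr N a b = ff b a / ff N a.
Proof. intros H. unfold rr, ff. apply prodn_div. intros k Hk.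
 assert (INR k < INR N) by (apply lt_INR; lia). lra. Qed.

Lemma prodn_zero f n k : (k < n)%nat -> f k = 0 -> prodn f n = 0.
Proof. induction n; intros Hk E; simpl; [lia|]. destruct (Nat.eq_dec k n). subst; rewrite E; ring.
 rewrite IHn by (auto; lia); ring. Qed.

Lemma rr_small N a b : (b < a)%nat -> rr N a b = 0.
Proof. intros H. unfold rr. apply (prodn_zero _ _ b); auto. rewrite Rminus_diag; unfold Rdiv; ring. Qed.

Lemma rr_C N a b : (a <= b)%nat -> (b <= N)%nat -> rr N a b * C N b = C (N - a) (b - a).
Proof. intros H1 H2. rewrite rr_ff by lia. rewrite !ff_fact by lia. unfold C.
 replace (N - a - (b - a))%nat with (N - b)%nat by lia.
 pose proof (INR_fact_lt_0 b). pose proof (INR_fact_lt_0 N). pose proof (INR_fact_lt_0 (N - a)).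
 pose proof (INR_fact_lt_0 (b - a)). pose proof (INR_fact_lt_0 (N - b)). field; lra. Qed.

Lemma sum_f_lsum f n : sum_f_R0 f n = lsum (seq 0 (S n)) f.
Proof. induction n. simpl. ring. simpl sum_f_R0. rewrite IHn. rewrite (seq_S (S n) 0). rewrite lsum_app. simpl. ring. Qed.

Lemma seq_shift_add a len : seq a len = map (Nat.add a) (seq 0 len).
Proof. revert a; induction len; intros a; simpl; auto. f_equal. lia. rewrite IHlen, (IHlen 1%nat), map_map. apply map_ext; intros; lia. Qed.

Lemma bern_mono N a t : (a <= N)%nat -> t ^ a = lsum (seq 0 (S N)) (fun b => rr N a b * B N b t).
Proof. intros H.
 replace (S N) with (a + S (N - a))%nat by lia. rewrite seq_app, lsum_app.
 rewrite (lsum_ext _ _ (fun _ => 0)). 2:{ intros b Hb; apply in_seq in Hb. rewrite rr_small by lia; ring. }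
 rewrite lsum_zero, Rplus_0_l. simpl Nat.add. rewrite seq_shift_add, lsum_map.
 transitivity (t ^ a * (t + (1 - t)) ^ (N - a)). { replace (t + (1 - t)) with 1 by ring. rewrite pow1; ring. }
 rewrite binomial, sum_f_lsum, <- lsum_scal. apply lsum_ext; intros i Hi. apply in_seq in Hi.
 unfold B. replace (rr N a (a + i) * (C N (a + i) * t ^ (a + i) * (1 - t) ^ (N - (a + i))))
   with ((rr N a (a + i) * C N (a + i)) * t ^ (a + i) * (1 - t) ^ (N - (a + i))) by ring.
 rewrite rr_C by lia. replace (a + i - a)%nat with i by lia. replace (N - (a + i))%nat with (N - a - i)%nat by lia.
 rewrite pow_add; ring. Qed.

Lemma bern_sum1 N t : lsum (seq 0 (S N)) (fun b => B N b t) = 1.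
Proof. transitivity (t ^ 0); [|simpl; reflexivity]. rewrite (bern_mono N 0 t) by lia. apply lsum_ext; intros. unfold rr; simpl; ring. Qed.

Lemma rr1 N b : (1 <= N)%nat -> rr N 1 b = INR b / INR N.
Proof. intros; unfold rr; simpl. rewrite !Rminus_0_r; ring. Qed.
Lemma rr2 N b : (2 <= N)%nat -> rr N 2 b = INR b / INR N * ((INR b - 1) / (INR N - 1)).
Proof. intros; unfold rr; simpl. rewrite !Rminus_0_r; ring. Qed.

Lemma bern_moment N t : (2 <= N)%nat ->
  lsum (seq 0 (S N)) (fun b => (INR b / INR N - t) ^ 2 * B N b t) = t * (1 - t) / INR N.
Proof. intros H. assert (HN : 2 <= INR N) by (replace 2 with (INR 2) by (simpl; ring); apply le_INR; auto).
 rewrite (lsum_ext _ _ (fun b => ((INR N - 1) / INR N) * (rr N 2 b * B N b t) + ((1 / INR N - 2 * t) * (rr N 1 b * B N b t) + t ^ 2 * (rr N 0 b * B N b t)))).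
 - rewrite !lsum_plus, !lsum_scal, <- !bern_mono by lia. field. lra.
 - intros b _. rewrite rr1, rr2 by lia. unfold rr; simpl prodn. field. lra. Qed.

Lemma B_nonneg N b t : 0 <= t <= 1 -> 0 <= B N b t.
Proof. intros H. unfold B, C. apply Rmult_le_pos; [apply Rmult_le_pos|apply pow_le; lra].
 - pose proof (INR_fact_lt_0 N). pose proof (INR_fact_lt_0 b). pose proof (INR_fact_lt_0 (N - b)).
   apply Rlt_le, Rdiv_lt_0_compat; auto. apply Rmult_lt_0_compat; auto.
 - apply pow_le; lra. Qed.

Lemma C_pos N b : 0 < C N b.
Proof. unfold C. pose proof (INR_fact_lt_0 N). pose proof (INR_fact_lt_0 b). pose proof (INR_fact_lt_0 (N - b)).
 apply Rdiv_lt_0_compat; auto. apply Rmult_lt_0_compat; auto. Qed.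

Lemma B00 t : B 0 0 t = 1.
Proof. unfold B, C; simpl. field. Qed.

Lemma div_le1 a b : a <= b -> 0 < b -> a / b <= 1.
Proof. intros. apply Rmult_le_reg_r with b; auto. unfold Rdiv; rewrite Rmult_assoc, Rinv_l; lra. Qed.
Lemma div_ge0 a b : 0 <= a -> 0 < b -> 0 <= a / b.
Proof. intros. unfold Rdiv; apply Rmult_le_pos; [lra|apply Rlt_le, Rinv_0_lt_compat; auto]. Qed.

Lemma pow_le1' x a : 0 <= x <= 1 -> x ^ a <= 1.
Proof. intros H; induction a; simpl; [lra|]. assert (0 <= x ^ a) by (apply pow_le; lra). nra. Qed.

Lemma rr_bound N a b : (b <= N)%nat -> 0 <= rr N a b <= 1.
Proof. intros H. destruct (Nat.lt_ge_cases b a). rewrite rr_small by auto; lra.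
 unfold rr. apply prodn_le1. intros k Hk.
 assert (INR k < INR b) by (apply lt_INR; lia). assert (INR b <= INR N) by (apply le_INR; lia).
 split. apply Rlt_le, Rdiv_lt_0_compat; lra.
 apply div_le1; lra. Qed.

Lemma pow_prodn x a : x ^ a = prodn (fun _ => x) a.
Proof. induction a; simpl; auto. rewrite IHa; ring. Qed.

Lemma rr_approx N a b : (2 * a <= N)%nat -> (b <= N)%nat -> (1 <= N)%nat ->
  Rabs (rr N a b - (INR b / INR N) ^ a) <= 2 * INR a ^ 2 / INR N.
Proof. intros H1 H2 H3.
 assert (HN : 1 <= INR N) by (replace 1 with (INR 1) by (simpl; ring); apply le_INR; auto).
 assert (Hb : 0 <= INR b <= INR N) by (split; [apply pos_INR|apply le_INR; auto]).
 assert (Ha2 : 2 * INR a <= INR N) by (replace 2 with (INR 2) by (simpl;ring); rewrite <- mult_INR; apply le_INR; auto).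
 assert (Hbn : 0 <= INR b / INR N <= 1) by (split; [apply div_ge0; lra| apply div_le1; lra]).
 destruct (Nat.lt_ge_cases b a).
 - rewrite rr_small by auto. destruct a; [lia|].
   assert (Hba : INR b + 1 <= INR (S a)) by (rewrite <- S_INR; apply le_INR; lia).
   rewrite Rminus_0_l, Rabs_Ropp, Rabs_right by (apply Rle_ge, pow_le; lra).
   replace ((INR b / INR N) ^ S a) with (INR b / INR N * (INR b / INR N) ^ a) by reflexivity.
   replace (INR (S a) ^ 2) with (INR (S a) * (INR (S a) * 1)) by reflexivity.
   assert (0 <= (INR b / INR N) ^ a <= 1) by (split; [apply pow_le|apply pow_le1']; lra).
   assert (INR b / INR N * (INR b / INR N) ^ a <= INR b / INR N) by nra.
   assert (INR b / INR N <= INR (S a) / INR N) by (apply Rmult_le_compat_r; [apply Rlt_le, Rinv_0_lt_compat; lra|lra]).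
   assert (INR (S a) / INR N <= 2 * (INR (S a) * (INR (S a) * 1)) / INR N).
   { apply Rmult_le_compat_r; [apply Rlt_le, Rinv_0_lt_compat; lra|]. pose proof (pos_INR a). rewrite S_INR in *. nra. }
   lra.
 - rewrite pow_prodn. eapply Rle_trans. unfold rr. apply prodn_diff.
   + intros k Hk. split; auto. assert (INR k < INR b) by (apply lt_INR; lia).
     split. apply Rlt_le, Rdiv_lt_0_compat; lra. apply div_le1; lra.
   + apply Rle_trans with (sum_upto (fun _ => 2 * INR a / INR N) a).
     * apply sum_upto_le. intros k Hk. assert (Hk' : INR k < INR a) by (apply lt_INR; auto).
       pose proof (pos_INR k).
       assert (Hu : 0 < / (INR N - INR k)) by (apply Rinv_0_lt_compat; lra).
       assert (Hv : 0 < / INR N) by (apply Rinv_0_lt_compat; lra).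
       assert (Eu : (INR N - INR k) * / (INR N - INR k) = 1) by (apply Rinv_r; lra).
       replace ((INR b - INR k) / (INR N - INR k) - INR b / INR N) with (- (INR k * ((INR N - INR b) * / (INR N - INR k)) * / INR N)) by (field; lra).
       assert (Hw : 0 <= (INR N - INR b) * / (INR N - INR k) <= 2).
       { split. apply Rmult_le_pos; lra. apply Rle_trans with (2 * (INR N - INR k) * / (INR N - INR k)).
         apply Rmult_le_compat_r; lra. rewrite Rmult_assoc, Eu; lra. }
       rewrite Rabs_Ropp, Rabs_right. unfold Rdiv. 
       apply Rmult_le_compat_r; [lra|]. nra.
       apply Rle_ge; apply Rmult_le_pos; [apply Rmult_le_pos|]; lra.
     * rewrite sum_upto_const. right; field; lra. Qed.

Definition cp (m : nat) (a b : nat -> nat) (y : point) : R :=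
  prodn (fun k => y k ^ a k * (1 - y k) ^ b k) m.
Definition mono (m : nat) (al : nat -> nat) (y : point) : R := prodn (fun k => y k ^ al k) m.

Lemma monos m (Jl : nat -> Prop) (Q : fn) : (forall j, Jl j -> (j < m)%nat) -> poly_in Jl Q ->
  exists mons : list (R * (nat -> nat)),
    (forall t, In t mons -> forall k, snd t k <> 0%nat -> Jl k) /\
    forall y, Q y = lsum mons (fun t => fst t * mono m (snd t) y).
Proof. intros HJ H; induction H.
 - exists ((c, fun _ => 0%nat) :: nil). split.
   + intros t [<-|[]] k Hk; simpl in Hk; lia.
   + intros y; simpl. unfold mono. rewrite prodn_one; [ring|]. intros; simpl; auto.
 - exists ((1, fun k => if Nat.eq_dec k i then 1%nat else 0%nat) :: nil). split.
   + intros t [<-|[]] k Hk; simpl in Hk. destruct (Nat.eq_dec k i); [subst; auto|lia].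
   + intros y; simpl. unfold mono.
     rewrite (prodn_ext _ (fun k' => if Nat.eq_dec k' i then y i * (fun _ => 1) k' else (fun _ => 1) k')).
     * rewrite prodn_single by auto. rewrite prodn_one by auto. ring.
     * intros k Hk. destruct (Nat.eq_dec k i); [subst; simpl; ring|simpl; ring].
 - destruct IHpoly_in1 as [m1 [H1 E1]], IHpoly_in2 as [m2 [H2 E2]].
   exists (m1 ++ m2). split.
   + intros t Ht. apply in_app_or in Ht. destruct Ht; [apply (H1 t)|apply (H2 t)]; auto.
   + intros y; rewrite lsum_app, E1, E2; auto.
 - destruct IHpoly_in1 as [m1 [H1 E1]], IHpoly_in2 as [m2 [H2 E2]].
   exists (flat_map (fun t1 => map (fun t2 => (fst t1 * fst t2, fun k => (snd t1 k + snd t2 k)%nat)) m2) m1). split.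
   + intros t Ht k Hk. apply in_flat_map in Ht. destruct Ht as [t1 [Ht1 Ht2]]. apply in_map_iff in Ht2.
     destruct Ht2 as [t2 [<- Ht2]]. simpl in Hk. destruct (Nat.eq_dec (snd t1 k) 0).
     * apply (H2 t2); auto; lia.
     * apply (H1 t1); auto.
   + intros y. rewrite E1, E2, lsum_flat_map. rewrite (Rmult_comm (lsum m1 _)), <- lsum_scal. apply lsum_ext; intros t1 _.
     rewrite lsum_map. rewrite (Rmult_comm (lsum m2 _)), <- lsum_scal. apply lsum_ext; intros t2 _. simpl. unfold mono.
     rewrite (prodn_ext (fun k => y k ^ (snd t1 k + snd t2 k)) (fun k => y k ^ snd t1 k * y k ^ snd t2 k)).
     rewrite prodn_mult; ring. intros; apply pow_add.
Qed.

Fixpoint nsum (f : nat -> nat) (m : nat) : nat := match m with O => O | S k => (nsum f k + f k)%nat end.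
Lemma nsum_ge f m k : (k < m)%nat -> (f k <= nsum f m)%nat.
Proof. induction m; intros H; simpl; [lia|]. destruct (Nat.eq_dec k m); [subst; lia|]. specialize (IHm ltac:(lia)); lia. Qed.

Lemma mons_bound m (Jl : nat -> Prop) (mons : list (R * (nat -> nat))) : (forall j, Jl j -> (j < m)%nat) ->
  (forall t, In t mons -> forall k, snd t k <> 0%nat -> Jl k) ->
  exists D, forall t, In t mons -> forall k, (snd t k <= D)%nat.
Proof. intros HJ; induction mons; intros H. exists 0%nat; intros t [].
 destruct IHmons as [D HD]. intros t Ht; apply (H t); auto with datatypes.
 exists (Nat.max D (nsum (snd a) m)). intros t [E|Ht] k.
 - subst t. destruct (Nat.eq_dec (snd a k) 0); [lia|]. assert (k < m)%nat by (apply HJ, (H a); auto with datatypes).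
   pose proof (nsum_ge (snd a) m k H0); lia.
 - specialize (HD t Ht k); lia. Qed.

Lemma nat_big (X : R) (N0 : nat) : exists N, (N0 <= N)%nat /\ INR N > X.
Proof. destruct (INR_unbounded X) as [N1 H1]. exists (Nat.max N0 N1). split; [lia|].
 assert (INR N1 <= INR (Nat.max N0 N1)) by (apply le_INR; lia). lra. Qed.

Lemma cube_rep m (Jl : nat -> Prop) (Q : fn) eps : (forall j, Jl j -> (j < m)%nat) -> poly_in Jl Q -> eps > 0 ->
  (forall y, (forall j, Jl j -> 0 <= y j <= 1) -> Q y >= eps) ->
  exists Cl : list ((nat -> nat) * (nat -> nat) * R),
    NoDup (map (fun t => let '(a, b, _) := t in (a, b)) Cl) /\
    (forall a b c, In (a, b, c) Cl -> c > 0 /\ (forall j, (a j <> 0)%nat \/ (b j <> 0)%nat -> Jl j)) /\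
    (forall y, Q y = lsum Cl (fun t => let '(a, b, c) := t in c * cp m a b y)).
Proof. intros HJ HQ Heps Hpos.
 destruct (monos m Jl Q HJ HQ) as [mons [Hsup EQ]].
 destruct (mons_bound m Jl mons HJ Hsup) as [D HD].
 set (Ss := lsum mons (fun t => Rabs (fst t))).
 assert (HS : 0 <= Ss) by (apply lsum_nonneg; intros; apply Rabs_pos).
 destruct (nat_big (2 * Ss * INR m * INR D ^ 2 / eps) (2 * D + 1)) as [N [HN1 HN2]].
 assert (HNp : 1 <= INR N) by (replace 1 with (INR 1) by (simpl; ring); apply le_INR; lia).
 set (Nv := fun k => if excluded_middle_informative (Jl k) then N else 0%nat).
 set (W := fun (al q : nat -> nat) => prodn (fun k => rr (Nv k) (al k) (q k)) m).
 set (Bp := fun (q : nat -> nat) (y : point) => prodn (fun k => B (Nv k) (q k) (y k)) m).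
 assert (Hal : forall t, In t mons -> forall k, (snd t k <= Nv k)%nat).
 { intros t Ht k. unfold Nv. destruct (excluded_middle_informative (Jl k)).
   - specialize (HD t Ht k); lia.
   - destruct (Nat.eq_dec (snd t k) 0); [lia|]. exfalso; apply n, (Hsup t Ht k); auto. }
 assert (C1 : forall t, In t mons -> forall y, mono m (snd t) y = lsum (gridn Nv m) (fun q => W (snd t) q * Bp q y)).
 { intros t Ht y. unfold mono.
   rewrite (prodn_ext _ (fun k => lsum (seq 0 (S (Nv k))) (fun b => rr (Nv k) (snd t k) b * B (Nv k) b (y k)))).
   - rewrite <- grid_sum_prod. apply lsum_ext; intros q _. unfold W, Bp. rewrite <- prodn_mult; auto.
   - intros k _. apply bern_mono; auto. }
 set (bq := fun q => lsum mons (fun t => fst t * W (snd t) q)).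
 assert (C2 : forall y, Q y = lsum (gridn Nv m) (fun q => bq q * Bp q y)).
 { intros y. rewrite EQ. rewrite (lsum_ext _ _ (fun t => lsum (gridn Nv m) (fun q => fst t * W (snd t) q * Bp q y))).
   - rewrite lsum_swap. apply lsum_ext; intros q _. unfold bq. rewrite Rmult_comm, <- lsum_scal.
     apply lsum_ext; intros; ring.
   - intros t Ht. rewrite C1 by auto. rewrite <- lsum_scal. apply lsum_ext; intros; ring. }
 assert (C3 : forall q, In q (gridn Nv m) -> bq q > 0).
 { intros q Hq. destruct (grid_prop Nv m q Hq) as [Gq1 Gq2].
   set (tq := fun k => INR (q k) / INR (Nv k)).
   assert (Htq : forall k, (k < m)%nat -> 0 <= tq k <= 1).
   { intros k Hk. unfold tq. specialize (Gq1 k Hk). destruct (Nat.eq_dec (Nv k) 0).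
     - rewrite e in *. replace (q k) with 0%nat by lia. simpl. unfold Rdiv; rewrite Rmult_0_l; lra.
     - assert (0 < INR (Nv k)) by (apply lt_0_INR; lia). assert (INR (q k) <= INR (Nv k)) by (apply le_INR; auto).
       split; [apply div_ge0; auto; apply pos_INR|apply div_le1; auto]. }
   assert (Qt : Q tq >= eps).
   { apply Hpos. intros j Hj. apply Htq; auto. }
   rewrite EQ in Qt.
   assert (Hdiff : forall t, In t mons -> Rabs (W (snd t) q - mono m (snd t) tq) <= INR m * (2 * INR D ^ 2 / INR N)).
   { intros t Ht. unfold W, mono. eapply Rle_trans. apply prodn_diff.
     - intros k Hk. split. apply rr_bound; auto. split; [apply pow_le|apply pow_le1']; apply Htq; auto.
     - rewrite <- sum_upto_const. apply sum_upto_le. intros k Hk.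
       destruct (Nat.eq_dec (snd t k) 0) as [E|E].
       + rewrite E. unfold rr; simpl. rewrite Rminus_diag, Rabs_R0. apply div_ge0; [nra|lra].
       + assert (Hk' : Jl k) by (apply (Hsup t Ht k E)).
         assert (NvN : Nv k = N) by (unfold Nv; destruct (excluded_middle_informative (Jl k)); tauto).
         unfold tq. rewrite NvN in *. eapply Rle_trans. apply rr_approx; [specialize (HD t Ht k); lia| |lia].
         specialize (Gq1 k Hk). rewrite NvN in Gq1; auto.
         unfold Rdiv. apply Rmult_le_compat_r; [apply Rlt_le, Rinv_0_lt_compat; lra|].
         assert (INR (snd t k) <= INR D) by (apply le_INR; auto). pose proof (pos_INR (snd t k)). nra. }
   assert (Eb : bq q - lsum mons (fun t => fst t * mono m (snd t) tq) = lsum mons (fun t => fst t * (W (snd t) q - mono m (snd t) tq))).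
   { unfold bq. rewrite (lsum_ext _ (fun t => fst t * (W (snd t) q - mono m (snd t) tq)) (fun t => fst t * W (snd t) q + (-1) * (fst t * mono m (snd t) tq))) by (intros; ring).
     rewrite lsum_plus, lsum_scal; ring. }
   set (K := INR m * (2 * INR D ^ 2 / INR N)) in *.
   assert (Hb : Rabs (bq q - lsum mons (fun t => fst t * mono m (snd t) tq)) <= Ss * K).
   { rewrite Eb. eapply Rle_trans; [apply lsum_abs|]. unfold Ss. rewrite Rmult_comm, <- lsum_scal.
     apply lsum_le. intros t Ht. rewrite Rabs_mult, Rmult_comm. apply Rmult_le_compat_r; [apply Rabs_pos|auto]. }
   assert (HSK : Ss * K < eps).
   { set (X := 2 * Ss * INR m * INR D ^ 2 / eps) in *.
     replace (Ss * K) with (X * eps / INR N) by (unfold K, X; field; lra).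
     apply Rmult_lt_reg_r with (INR N); [lra|]. unfold Rdiv; rewrite Rmult_assoc, Rinv_l by lra. nra. }
   apply abs_le_inv in Hb. lra. }
 exists (map (fun q => (q, fun k => (Nv k - q k)%nat, bq q * prodn (fun k => C (Nv k) (q k)) m)) (gridn Nv m)).
 assert (Hgle : forall q, In q (gridn Nv m) -> forall k, (q k <= Nv k)%nat).
 { intros q Hq k. destruct (grid_prop Nv m q Hq) as [G1 G2]. destruct (Nat.lt_ge_cases k m); [auto|rewrite G2; auto; lia]. }
 split; [|split].
 - rewrite map_map. apply Injective_map_NoDup; [|apply grid_NoDup].
   intros q1 q2 E. inversion E; auto.
 - intros a b c H. apply in_map_iff in H. destruct H as [q [E Hq]]. inversion E; subst a b c. split.
   + apply Rmult_gt_0_compat; [apply C3; auto|]. apply prodn_pos; intros; apply C_pos.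
   + intros j Hj. assert (Nv j <> 0%nat) by (specialize (Hgle q Hq j); lia).
     unfold Nv in H. destruct (excluded_middle_informative (Jl j)); [auto|lia].
 - intros y. rewrite C2, lsum_map. apply lsum_ext; intros q Hq. unfold Bp, cp, B.
   rewrite Rmult_assoc, <- prodn_mult. f_equal. apply prodn_ext; intros; ring.
Qed.

Lemma inv_small eps : eps > 0 -> exists N, forall n, (N <= n)%nat -> / (INR n + 1) < eps.
Proof. intros He. destruct (INR_unbounded (/ eps)) as [N HN]. exists N. intros n Hn.
 assert (INR N <= INR n) by (apply le_INR; auto). pose proof (pos_INR n).
 apply Rmult_lt_reg_r with (INR n + 1); [lra|]. rewrite Rinv_l by lra.
 assert (/ eps * eps = 1) by (apply Rinv_l; lra). nra. Qed.

Lemma cv_inv c : Un_cv (fun k => c / (INR k + 1)) 0.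
Proof. intros e He. destruct (Req_dec c 0) as [E|E].
 - exists 0%nat; intros; unfold R_dist; rewrite E; unfold Rdiv; rewrite Rmult_0_l, Rminus_0_r, Rabs_R0; auto.
 - assert (Hc : 0 < Rabs c) by (apply Rabs_pos_lt; auto).
   destruct (inv_small (e / Rabs c)) as [N HN]. apply Rdiv_lt_0_compat; auto.
   exists N; intros n Hn. unfold R_dist. rewrite Rminus_0_r. unfold Rdiv. rewrite Rabs_mult.
   pose proof (pos_INR n). rewrite (Rabs_right (/ _)) by (apply Rle_ge, Rlt_le, Rinv_0_lt_compat; lra).
   specialize (HN n Hn). apply Rmult_lt_reg_l with (/ Rabs c). apply Rinv_0_lt_compat; auto.
   rewrite <- Rmult_assoc, Rinv_l by lra. rewrite Rmult_comm. unfold Rdiv in HN. lra. Qed.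

Lemma strict_mono (phi : nat -> nat) : (forall k, (phi k < phi (S k))%nat) -> forall a b, (a < b)%nat -> (phi a < phi b)%nat.
Proof. intros H a b Hab. induction b; [lia|]. destruct (Nat.eq_dec a b). subst; auto. specialize (IHb ltac:(lia)). specialize (H b). lia. Qed.
Lemma strict_ge (phi : nat -> nat) : (forall k, (phi k < phi (S k))%nat) -> forall k, (k <= phi k)%nat.
Proof. intros H k; induction k; [lia|]. specialize (H k); lia. Qed.

Lemma cv_sub (u : nat -> R) l phi : Un_cv u l -> (forall k, (phi k < phi (S k))%nat) -> Un_cv (fun k => u (phi k)) l.
Proof. intros H Hp e He. destruct (H e He) as [N HN]. exists N; intros n Hn. apply HN.
 pose proof (strict_ge phi Hp n); lia. Qed.

Lemma bw1 (u : nat -> R) M : (forall k, Rabs (u k) <= M) ->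
  exists phi l, (forall k, (phi k < phi (S k))%nat) /\ Un_cv (fun k => u (phi k)) l.
Proof. intros Hb.
 destruct (Bolzano_Weierstrass u (fun c => - M <= c <= M) (compact_P3 (- M) M)) as [l Hl].
 { intros k; apply abs_le_inv; auto. }
 assert (Hs : forall Nk : nat * nat, exists p, (fst Nk <= p)%nat /\ Rabs (u p - l) < / (INR (snd Nk) + 1)).
 { intros [N k]. simpl. assert (Hp : 0 < / (INR k + 1)) by (apply Rinv_0_lt_compat; pose proof (pos_INR k); lra).
   destruct (Hl (fun y => Rabs (y - l) < / (INR k + 1)) N) as [p [Hp1 Hp2]].
   - exists (mkposreal _ Hp). intros y Hy. unfold disc in Hy. simpl in Hy. auto.
   - exists p; auto. }
 set (sel := fun Nk => proj1_sig (constructive_indefinite_description _ (Hs Nk))).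
 assert (Hsel : forall Nk, (fst Nk <= sel Nk)%nat /\ Rabs (u (sel Nk) - l) < / (INR (snd Nk) + 1)).
 { intros Nk. unfold sel. destruct (constructive_indefinite_description _ (Hs Nk)); simpl; auto. }
 set (phi := fix phi k := match k with O => sel (0%nat, 0%nat) | S k' => sel (S (phi k'), S k') end).
 exists phi, l. split.
 - intros k. simpl. destruct (Hsel (S (phi k), S k)) as [A _]. simpl in A. lia.
 - assert (Hd : forall k, Rabs (u (phi k) - l) < / (INR k + 1)).
   { intros [|k]; simpl phi; [apply (Hsel (0%nat, 0%nat))|apply (Hsel (S (phi k), S k))]. }
   intros e He. destruct (inv_small e He) as [N HN]. exists N; intros n Hn. unfold R_dist.
   specialize (Hd n); specialize (HN n Hn); lra. Qed.

Lemma bw_list (L : list nat) (u : nat -> point) M : (forall k i, In i L -> Rabs (u k i) <= M) ->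
  exists phi x, (forall k, (phi k < phi (S k))%nat) /\ forall i, In i L -> Un_cv (fun k => u (phi k) i) (x i).
Proof. revert u; induction L as [|i L IH]; intros u Hb.
 - exists (fun k => k), (fun _ => 0). split; [intros; lia|intros i []].
 - destruct (IH u) as [phi1 [x1 [H1 H2]]]. { intros k j Hj; apply Hb; simpl; auto. }
   destruct (bw1 (fun k => u (phi1 k) i) M) as [psi [l [H3 H4]]]. { intros; apply Hb; simpl; auto. }
   exists (fun k => phi1 (psi k)), (fun j => if Nat.eq_dec j i then l else x1 j). split.
   + intros k. apply strict_mono; auto.
   + intros j Hj. destruct (Nat.eq_dec j i). subst; auto.
     destruct Hj as [E|Hj]; [congruence|]. apply (cv_sub (fun k => u (phi1 k) j)); auto. Qed.

Lemma cv_bounds (s : nat -> R) l a b : Un_cv s l -> (forall k, a <= s k <= b) -> a <= l <= b.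
Proof. intros H Hb. split.
 - apply Rle_cv_lim with (Un := fun _ => a) (Vn := s); [intros k; apply Hb|apply cv_const|exact H].
 - apply Rle_cv_lim with (Un := s) (Vn := fun _ => b); [intros k; apply Hb|exact H|apply cv_const]. Qed.

Lemma fin_list (P : nat -> Prop) n : (forall i, P i -> (i < n)%nat) -> exists l, NoDup l /\ forall i, In i l <-> P i.
Proof. revert P; induction n; intros P HP.
 - exists nil. split. constructor. intros i; split; [intros []|intros H; specialize (HP i H); lia].
 - destruct (IHn (fun i => P i /\ (i < n)%nat)) as [l [Hl1 Hl2]]. { intros i [_ H]; auto. }
   destruct (excluded_middle_informative (P n)).
   + exists (n :: l). split.
     * constructor; auto. intros H; apply Hl2 in H; lia.
     * intros i; split. intros [E|H]; [subst; auto|apply Hl2 in H; tauto].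
       intros H. destruct (Nat.eq_dec i n); [left; auto|right; apply Hl2; split; auto]. specialize (HP i H); lia.
   + exists l. split; auto. intros i; split. intros H; apply Hl2 in H; tauto.
     intros H. apply Hl2. split; auto. specialize (HP i H). destruct (Nat.eq_dec i n); [subst; tauto|lia]. Qed.

Lemma ed_lemma n (U V : nat -> Prop) (K1 K2 : point -> Prop) (A G : fn) (Rb : R) (iY : nat -> R) :
  Rb > 0 -> (forall i, U i -> (i < n)%nat) -> (forall i, V i -> (i < n)%nat) ->
  poly_in U A -> poly_in V G ->
  (forall k, 0 <= iY k) -> (forall i, U i -> V i -> iY i = 1) ->
  (forall x, K1 x -> forall i, U i -> Rabs (x i) <= Rb) -> (forall x, K2 x -> forall i, V i -> Rabs (x i) <= Rb) ->
  (forall u x, (forall k, K1 (u k)) -> (forall i, U i -> Un_cv (fun k => u k i) (x i)) -> K1 x) ->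
  (forall u x, (forall k, K2 (u k)) -> (forall i, V i -> Un_cv (fun k => u k i) (x i)) -> K2 x) ->
  (forall x x', K1 x -> K2 x' -> (forall i, U i -> V i -> x i = x' i) -> A x + G x' > 0) ->
  exists eps eta, eps > 0 /\ eta > 0 /\ forall x x', K1 x -> K2 x' ->
    sum_upto (fun k => iY k * ((x k - x' k) / (2 * Rb)) ^ 2) n <= eps -> A x + G x' >= eta.
Proof. intros HR HU HV HA HG HiY0 HiY1 HB1 HB2 HC1 HC2 Hpos.
 destruct (classic (exists eps eta, eps > 0 /\ eta > 0 /\ forall x x', K1 x -> K2 x' ->
    sum_upto (fun k => iY k * ((x k - x' k) / (2 * Rb)) ^ 2) n <= eps -> A x + G x' >= eta)) as [H|H]; auto.
 exfalso.
 assert (Hk : forall k : nat, exists p : point * point, K1 (fst p) /\ K2 (snd p) /\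
   sum_upto (fun j => iY j * ((fst p j - snd p j) / (2 * Rb)) ^ 2) n <= / (INR k + 1) /\ A (fst p) + G (snd p) < / (INR k + 1)).
 { intros k. apply not_all_not_ex. intros H'. apply H. exists (/ (INR k + 1)), (/ (INR k + 1)).
   assert (0 < / (INR k + 1)) by (apply Rinv_0_lt_compat; pose proof (pos_INR k); lra).
   split; [auto|split; [auto|]]. intros x x' H1 H2 H3. apply Rnot_lt_ge. intros H4. apply (H' (x, x')); simpl; auto. }
 set (ps := fun k => proj1_sig (constructive_indefinite_description _ (Hk k))).
 assert (Hps : forall k, K1 (fst (ps k)) /\ K2 (snd (ps k)) /\
   sum_upto (fun j => iY j * ((fst (ps k) j - snd (ps k) j) / (2 * Rb)) ^ 2) n <= / (INR k + 1) /\ A (fst (ps k)) + G (snd (ps k)) < / (INR k + 1)).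
 { intros k. unfold ps. destruct (constructive_indefinite_description _ (Hk k)); simpl; auto. }
 destruct (fin_list U n HU) as [Ul [_ HUl]]. destruct (fin_list V n HV) as [Vl [_ HVl]].
 destruct (bw_list Ul (fun k => fst (ps k)) Rb) as [phi [xs [Hphi Hxs]]].
 { intros k i Hi. apply HB1; [apply Hps|apply HUl; auto]. }
 destruct (bw_list Vl (fun k => snd (ps (phi k))) Rb) as [psi [xs' [Hpsi Hxs']]].
 { intros k i Hi. apply HB2; [apply Hps|apply HVl; auto]. }
 set (chi := fun k => phi (psi k)).
 assert (Hchi : forall k, (chi k < chi (S k))%nat) by (intros k; unfold chi; apply strict_mono; auto).
 assert (Cx : forall i, U i -> Un_cv (fun k => fst (ps (chi k)) i) (xs i)).
 { intros i Hi. apply (cv_sub (fun k => fst (ps (phi k)) i)); auto. apply Hxs, HUl; auto. }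
 assert (Cx' : forall i, V i -> Un_cv (fun k => snd (ps (chi k)) i) (xs' i)).
 { intros i Hi. apply Hxs', HVl; auto. }
 assert (K1s : K1 xs) by (apply (HC1 (fun k => fst (ps (chi k)))); auto; intros k; apply Hps).
 assert (K2s : K2 xs') by (apply (HC2 (fun k => snd (ps (chi k)))); auto; intros k; apply Hps).
 assert (Hinvc : Un_cv (fun k => 1 / (INR (chi k) + 1)) 0) by (apply (cv_sub (fun k => 1 / (INR k + 1))); auto; apply cv_inv).
 assert (Hagree : forall i, U i -> V i -> xs i = xs' i).
 { intros i Hu Hv. set (s := fun k => (fst (ps (chi k)) i - snd (ps (chi k)) i) * / (2 * Rb)).
   assert (Hs : Un_cv s ((xs i - xs' i) * / (2 * Rb))).
   { apply (CV_mult _ (fun _ => / (2 * Rb))). apply CV_minus; auto. apply cv_const. }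
   assert (Hle : (xs i - xs' i) * / (2 * Rb) * ((xs i - xs' i) * / (2 * Rb)) <= 0 * 0).
   { apply Rle_cv_lim with (Un := fun k => s k * s k) (Vn := fun k => 1 / (INR (chi k) + 1)).
     - intros k. destruct (Hps (chi k)) as [_ [_ [Hd _]]].
       assert (T := sum_upto_term (fun j => iY j * ((fst (ps (chi k)) j - snd (ps (chi k)) j) / (2 * Rb)) ^ 2) n i (HU i Hu)).
       assert (TT := T (fun j _ => Rmult_le_pos _ _ (HiY0 j) (pow2_ge_0 _))). cbv beta in TT.
       rewrite HiY1 in TT by auto. unfold s. unfold Rdiv in *. rewrite Rmult_1_l.
       replace (((fst (ps (chi k)) i - snd (ps (chi k)) i) * / (2 * Rb)) ^ 2) with
         ((fst (ps (chi k)) i - snd (ps (chi k)) i) * / (2 * Rb) * ((fst (ps (chi k)) i - snd (ps (chi k)) i) * / (2 * Rb))) in TT by ring.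
       lra.
     - apply CV_mult; auto.
     - replace (0 * 0) with 0 by ring. auto. }
   assert (Hz : (xs i - xs' i) * / (2 * Rb) = 0) by nra.
   apply Rmult_integral in Hz. destruct Hz as [Hz|Hz]; [lra|]. exfalso. assert (0 < / (2 * Rb)) by (apply Rinv_0_lt_compat; lra). lra. }
 assert (Hp := Hpos xs xs' K1s K2s Hagree).
 assert (Hlim : A xs + G xs' <= 0).
 { apply Rle_cv_lim with (Un := fun k => A (fst (ps (chi k))) + G (snd (ps (chi k)))) (Vn := fun k => 1 / (INR (chi k) + 1)).
   - intros k. destruct (Hps (chi k)) as [_ [_ [_ Hl]]]. unfold Rdiv; rewrite Rmult_1_l; lra.
   - apply CV_plus. apply (pi_cont U A HA); auto. apply (pi_cont V G HG); auto.
   - auto. }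
 lra.
Qed.

Lemma bern_weights_sum Nv n (tau : nat -> R) :
  lsum (gridn Nv n) (fun q => prodn (fun k => B (Nv k) (q k) (tau k)) n) = 1.
Proof. rewrite (grid_sum_prod Nv n (fun k b => B (Nv k) b (tau k))). apply prodn_one. intros; apply bern_sum1. Qed.

Lemma bern_weights_coord Nv n (tau : nat -> R) k (psi : nat -> R) : (k < n)%nat ->
  lsum (gridn Nv n) (fun q => psi (q k) * prodn (fun k' => B (Nv k') (q k') (tau k')) n) =
  lsum (seq 0 (S (Nv k))) (fun b => psi b * B (Nv k) b (tau k)).
Proof. intros Hk.
 rewrite (lsum_ext _ _ (fun q => prodn (fun k' => (fun k' b => if Nat.eq_dec k' k then psi b * B (Nv k') b (tau k') else B (Nv k') b (tau k')) k' (q k')) n)).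
 - rewrite (grid_sum_prod Nv n (fun k' b => if Nat.eq_dec k' k then psi b * B (Nv k') b (tau k') else B (Nv k') b (tau k'))).
   rewrite (prodn_ext _ (fun k' => if Nat.eq_dec k' k then lsum (seq 0 (S (Nv k))) (fun b => psi b * B (Nv k) b (tau k)) * (fun _ => 1) k' else (fun _ => 1) k')).
   + rewrite prodn_single, prodn_one; auto; ring.
   + intros k' Hk'. destruct (Nat.eq_dec k' k). subst k'; ring. apply bern_sum1.
 - intros q _. rewrite <- (prodn_single (fun k' => B (Nv k') (q k') (tau k')) n k (psi (q k)) Hk).
   apply prodn_ext; intros k' _. destruct (Nat.eq_dec k' k); [subst k'|]; auto. Qed.

Lemma split_lemma n (U V : nat -> Prop) (K1 K2 : point -> Prop) (A G : fn) :
  (forall i, U i -> (i < n)%nat) -> (forall i, V i -> (i < n)%nat) ->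
  poly_in U A -> poly_in V G ->
  (exists R1, forall x, K1 x -> forall i, U i -> Rabs (x i) <= R1) ->
  (exists R2, forall x, K2 x -> forall i, V i -> Rabs (x i) <= R2) ->
  (forall u x, (forall k, K1 (u k)) -> (forall i, U i -> Un_cv (fun k => u k i) (x i)) -> K1 x) ->
  (forall u x, (forall k, K2 (u k)) -> (forall i, V i -> Un_cv (fun k => u k i) (x i)) -> K2 x) ->
  (forall x x', K1 x -> K2 x' -> (forall i, U i -> V i -> x i = x' i) -> A x + G x' > 0) ->
  exists hh, poly_in (fun i => U i /\ V i) hh /\ (forall x, K1 x -> A x - hh x > 0) /\ (forall x, K2 x -> G x + hh x > 0).
Proof. intros HU HV HA HG [R1 HB1] [R2 HB2] HC1 HC2 Hpos.
 set (Rb := Rmax (Rmax R1 R2) 1).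
 assert (HRb : Rb > 0) by (unfold Rb; pose proof (Rmax_r (Rmax R1 R2) 1); lra).
 assert (HB1' : forall x, K1 x -> forall i, U i -> Rabs (x i) <= Rb).
 { intros x Hx i Hi. specialize (HB1 x Hx i Hi). unfold Rb. pose proof (Rmax_l R1 R2). pose proof (Rmax_l (Rmax R1 R2) 1). lra. }
 assert (HB2' : forall x, K2 x -> forall i, V i -> Rabs (x i) <= Rb).
 { intros x Hx i Hi. specialize (HB2 x Hx i Hi). unfold Rb. pose proof (Rmax_r R1 R2). pose proof (Rmax_l (Rmax R1 R2) 1). lra. }
 set (Y := fun i => U i /\ V i).
 set (iY := fun k => if excluded_middle_informative (Y k) then 1 else 0).
 assert (HiY0 : forall k, 0 <= iY k) by (intros k; unfold iY; destruct (excluded_middle_informative (Y k)); lra).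
 assert (HiY1 : forall i, U i -> V i -> iY i = 1) by (intros i H1 H2; unfold iY; destruct (excluded_middle_informative (Y i)); [auto|exfalso; apply n0; split; auto]).
 destruct (ed_lemma n U V K1 K2 A G Rb iY HRb HU HV HA HG HiY0 HiY1 HB1' HB2' HC1 HC2 Hpos) as [eps [eta [Heps [Heta HED]]]].
 set (tau := fun (x : point) k => (x k + Rb) / (2 * Rb)).
 assert (Htau : forall x k, Rabs (x k) <= Rb -> 0 <= tau x k <= 1).
 { intros x k H. apply abs_le_inv in H. unfold tau. split. apply div_ge0; lra. apply div_le1; lra. }
 destruct (pi_bounded U A HA Rb) as [MA0 HMA0]. destruct (pi_bounded V G HG Rb) as [MG0 HMG0].
 set (MA := Rmax MA0 0). set (MG := Rmax MG0 0).
 assert (HMA : forall x, K1 x -> Rabs (A x) <= MA) by (intros x Hx; unfold MA; pose proof (Rmax_l MA0 0); specialize (HMA0 x (HB1' x Hx)); lra).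
 assert (HMG : forall x, K2 x -> Rabs (G x) <= MG) by (intros x Hx; unfold MG; pose proof (Rmax_l MG0 0); specialize (HMG0 x (HB2' x Hx)); lra).
 assert (MA_0 : 0 <= MA) by apply Rmax_r. assert (MG_0 : 0 <= MG) by apply Rmax_r.
 set (M0 := MA + MG + eta).
 set (c := (eta / 2 + MA + MG + M0) * 4 / eps).
 assert (Hc : 0 <= c) by (unfold c, M0; apply div_ge0; [lra|auto]).
 destruct (nat_big (2 * c * INR n / eta) 2) as [N [HN1 HN2]].
 assert (HN : 2 <= INR N) by (replace 2 with (INR 2) by (simpl; ring); apply le_INR; auto).
 set (Nv := fun k => if excluded_middle_informative (Y k) then N else 0%nat).
 set (dq := fun (q : nat -> nat) (x : point) => sum_upto (fun k => iY k * (INR (q k) / INR N - tau x k) ^ 2) n).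
 assert (Hdq0 : forall q x, 0 <= dq q x) by (intros; apply sum_upto_nonneg; intros; apply Rmult_le_pos; [auto|apply pow2_ge_0]).
 assert (Hdist : forall q x x', sum_upto (fun k => iY k * ((x k - x' k) / (2 * Rb)) ^ 2) n <= 2 * dq q x + 2 * dq q x').
 { intros q x x'. unfold dq. rewrite <- !sum_upto_scal, <- sum_upto_plus. apply sum_upto_le. intros k _.
   replace ((x k - x' k) / (2 * Rb)) with (tau x k - tau x' k) by (unfold tau; field; lra).
   specialize (HiY0 k). set (a := INR (q k) / INR N). set (u := tau x k). set (v := tau x' k).
   assert (Hq : (u - v) ^ 2 <= (2 * (a - u) ^ 2 + 2 * (a - v) ^ 2)).
   { assert (0 <= (2 * a - u - v) ^ 2) by apply pow2_ge_0. replace (2 * (a - u) ^ 2 + 2 * (a - v) ^ 2) with ((u - v) ^ 2 + (2 * a - u - v) ^ 2) by ring. lra. }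
   apply Rmult_le_compat_l with (r := iY k) in Hq; auto. lra. }
 assert (Hv : forall q, exists v, Rabs v <= M0 /\ (forall x, K1 x -> dq q x <= eps / 4 -> A x - v >= eta / 2) /\
   (forall x', K2 x' -> dq q x' <= eps / 4 -> G x' + v >= eta / 2)).
 { intros q. set (E := fun s => s = - MA - eta \/ exists x', K2 x' /\ dq q x' <= eps / 4 /\ s = - G x').
   destruct (completeness E) as [sp [Hub Hlub]].
   - exists MG. intros s [->|[x' [H1 [_ ->]]]]. lra. specialize (HMG x' H1). apply abs_le_inv in HMG; lra.
   - exists (- MA - eta); left; auto.
   - exists (sp + eta / 2).
     assert (Hsp1 : - MA - eta <= sp) by (apply Hub; left; auto).
     assert (Hsp2 : sp <= MG).
     { apply Hlub. intros s [->|[x' [H1 [_ ->]]]]. lra. specialize (HMG x' H1). apply abs_le_inv in HMG; lra. }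
     split; [|split].
     + apply Rabs_le. unfold M0; lra.
     + intros x Hx Hd. assert (sp <= A x - eta).
       { apply Hlub. intros s [->|[x' [H1 [H2 ->]]]].
         - specialize (HMA x Hx). apply abs_le_inv in HMA; lra.
         - assert (A x + G x' >= eta). { apply HED; auto. specialize (Hdist q x x'). lra. } lra. }
       lra.
     + intros x' Hx' Hd. assert (- G x' <= sp) by (apply Hub; right; exists x'; auto). lra. }
 set (vv := fun q => proj1_sig (constructive_indefinite_description _ (Hv q))).
 assert (Hvv : forall q, Rabs (vv q) <= M0 /\ (forall x, K1 x -> dq q x <= eps / 4 -> A x - vv q >= eta / 2) /\
   (forall x', K2 x' -> dq q x' <= eps / 4 -> G x' + vv q >= eta / 2)).
 { intros q. unfold vv. destruct (constructive_indefinite_description _ (Hv q)); simpl; auto. }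
 set (w := fun q (x : point) => prodn (fun k => B (Nv k) (q k) (tau x k)) n).
 set (hh := fun x => lsum (gridn Nv n) (fun q => vv q * w q x)).
 assert (Hw0 : forall x, (forall k, Y k -> Rabs (x k) <= Rb) -> forall q, In q (gridn Nv n) -> 0 <= w q x).
 { intros x Hx q Hq. destruct (grid_prop Nv n q Hq) as [G1 _]. apply prodn_nonneg. intros k Hk.
   specialize (G1 k Hk). unfold Nv in G1. destruct (excluded_middle_informative (Y k)) as [Hy|Hy].
   - apply B_nonneg, Htau; auto.
   - replace (Nv k) with 0%nat by (unfold Nv; destruct (excluded_middle_informative (Y k)); tauto).
     replace (q k) with 0%nat by lia. rewrite B00; lra. }
 assert (Hw1 : forall x, lsum (gridn Nv n) (fun q => w q x) = 1) by (intros x; apply bern_weights_sum).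
 assert (Hmom : forall x, (forall k, Y k -> Rabs (x k) <= Rb) -> lsum (gridn Nv n) (fun q => dq q x * w q x) <= INR n / INR N).
 { intros x Hx. unfold dq. rewrite (lsum_ext _ _ (fun q => sum_upto (fun k => iY k * (INR (q k) / INR N - tau x k) ^ 2 * w q x) n)).
   2: { intros q _. rewrite Rmult_comm, <- sum_upto_scal. apply sum_upto_ext; intros; ring. }
   rewrite lsum_sum_upto. replace (INR n / INR N) with (sum_upto (fun _ => / INR N) n) by (rewrite sum_upto_const; unfold Rdiv; ring).
   apply sum_upto_le. intros k Hk. unfold w.
   rewrite (bern_weights_coord Nv n (tau x) k (fun b => iY k * (INR b / INR N - tau x k) ^ 2) Hk).
   unfold iY, Nv. destruct (excluded_middle_informative (Y k)) as [Hy|Hy].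
   - rewrite (lsum_ext _ _ (fun b => (INR b / INR N - tau x k) ^ 2 * B N b (tau x k))) by (intros; ring).
     rewrite bern_moment by auto. specialize (Htau x k (Hx k Hy)).
     unfold Rdiv. assert (0 < / INR N) by (apply Rinv_0_lt_compat; lra).
     assert (tau x k * (1 - tau x k) <= 1) by nra. nra.
   - rewrite (lsum_ext _ _ (fun _ => 0)) by (intros; ring). rewrite lsum_zero. apply Rlt_le, Rinv_0_lt_compat; lra. }
 assert (Hfin : c * (INR n / INR N) < eta / 2).
 { apply Rmult_lt_reg_r with (INR N); [lra|]. unfold Rdiv. replace (c * (INR n * / INR N) * INR N) with (c * INR n) by (field; lra).
   set (X := 2 * c * INR n * / eta) in *. assert (c * INR n = X * eta / 2) by (unfold X; field; lra).
   rewrite H. assert (HNX : INR N > X) by exact HN2. nra. }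
 exists hh. split; [|split].
 - unfold hh. apply pi_lsum. intros q Hq. apply pi_scal. unfold w. apply pi_prodn. intros k Hk.
   destruct (grid_prop Nv n q Hq) as [G1 _]. specialize (G1 k Hk).
   unfold Nv in *. destruct (excluded_middle_informative (Y k)) as [Hy|Hy].
   + unfold B, tau. apply pi_mul; [apply pi_mul; [apply pi_const|]|]; apply pi_pow.
     * apply pi_ext with (fun x => (x k + Rb) * / (2 * Rb)); [|intros; unfold Rdiv; ring].
       apply (pi_mul Y (fun x => x k + Rb) (fun _ => / (2 * Rb))); [apply (pi_add Y (fun x => x k) (fun _ => Rb)); constructor; auto|constructor].
     * apply pi_sub; [constructor|]. apply pi_ext with (fun x => (x k + Rb) * / (2 * Rb)); [|intros; unfold Rdiv; ring].
       apply (pi_mul Y (fun x => x k + Rb) (fun _ => / (2 * Rb))); [apply (pi_add Y (fun x => x k) (fun _ => Rb)); constructor; auto|constructor].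
   + replace (q k) with 0%nat by lia. apply pi_ext with (fun _ => 1); [constructor|]. intros; rewrite B00; auto.
 - intros x Hx. assert (HxY : forall k, Y k -> Rabs (x k) <= Rb) by (intros k [Hk _]; apply HB1'; auto).
   assert (E : A x - hh x = lsum (gridn Nv n) (fun q => (A x - vv q) * w q x)).
   { unfold hh. rewrite (lsum_ext _ (fun q => (A x - vv q) * w q x) (fun q => A x * w q x + (-1) * (vv q * w q x))) by (intros; ring).
     rewrite lsum_plus, lsum_scal, lsum_scal, Hw1. ring. }
   rewrite E. apply Rlt_le_trans with (lsum (gridn Nv n) (fun q => (eta / 2 - c * dq q x) * w q x)).
   + rewrite (lsum_ext _ (fun q => (eta / 2 - c * dq q x) * w q x) (fun q => eta / 2 * w q x + (- c) * (dq q x * w q x))) by (intros; ring).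
     rewrite lsum_plus, !lsum_scal, Hw1. specialize (Hmom x HxY). nra.
   + apply lsum_le. intros q Hq. apply Rmult_le_compat_r; [apply Hw0; auto|].
     destruct (Hvv q) as [Hb [H1 _]]. destruct (Rle_lt_dec (dq q x) (eps / 4)) as [Hd|Hd].
     * specialize (H1 x Hx Hd). specialize (Hdq0 q x). nra.
     * specialize (HMA x Hx). apply abs_le_inv in HMA. apply abs_le_inv in Hb.
       assert (c * dq q x >= eta / 2 + MA + MG + M0).
       { unfold c. replace ((eta / 2 + MA + MG + M0) * 4 / eps * dq q x) with ((eta / 2 + MA + MG + M0) * (4 * dq q x / eps)) by (field; lra).
         assert (1 <= 4 * dq q x / eps) by (apply Rmult_le_reg_r with eps; [lra|]; unfold Rdiv; rewrite Rmult_assoc, Rinv_l; lra).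
         unfold M0 in *. nra. }
       lra.
 - intros x Hx. assert (HxY : forall k, Y k -> Rabs (x k) <= Rb) by (intros k [_ Hk]; apply HB2'; auto).
   assert (E : G x + hh x = lsum (gridn Nv n) (fun q => (G x + vv q) * w q x)).
   { unfold hh. rewrite (lsum_ext _ (fun q => (G x + vv q) * w q x) (fun q => G x * w q x + vv q * w q x)) by (intros; ring).
     rewrite lsum_plus, lsum_scal, Hw1. ring. }
   rewrite E. apply Rlt_le_trans with (lsum (gridn Nv n) (fun q => (eta / 2 - c * dq q x) * w q x)).
   + rewrite (lsum_ext _ (fun q => (eta / 2 - c * dq q x) * w q x) (fun q => eta / 2 * w q x + (- c) * (dq q x * w q x))) by (intros; ring).
     rewrite lsum_plus, !lsum_scal, Hw1. specialize (Hmom x HxY). nra.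
   + apply lsum_le. intros q Hq. apply Rmult_le_compat_r; [apply Hw0; auto|].
     destruct (Hvv q) as [Hb [_ H2]]. destruct (Rle_lt_dec (dq q x) (eps / 4)) as [Hd|Hd].
     * specialize (H2 x Hx Hd). specialize (Hdq0 q x). nra.
     * specialize (HMG x Hx). apply abs_le_inv in HMG. apply abs_le_inv in Hb.
       assert (c * dq q x >= eta / 2 + MA + MG + M0).
       { unfold c. replace ((eta / 2 + MA + MG + M0) * 4 / eps * dq q x) with ((eta / 2 + MA + MG + M0) * (4 * dq q x / eps)) by (field; lra).
         assert (1 <= 4 * dq q x / eps) by (apply Rmult_le_reg_r with eps; [lra|]; unfold Rdiv; rewrite Rmult_assoc, Rinv_l; lra).
         unfold M0 in *. nra. }
       lra.
Qed.

Lemma h_cp m g a b x : h m g a b x = cp m a b (fun k => g k x).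
Proof. unfold h, cp. induction m; simpl; auto. rewrite IHm; auto. Qed.

Lemma lin_comb_lsum m g Cl x : lin_comb m g Cl x = lsum Cl (fun t => let '(a, b, c) := t in c * cp m a b (fun k => g k x)).
Proof. unfold lin_comb. induction Cl as [|[[a b] c] Cl IH]; simpl; auto. rewrite IH, h_cp; auto. Qed.

Lemma sum_zero_terms F n : (forall k, (k < n)%nat -> 0 <= F k) -> sum_upto F n <= 0 -> forall k, (k < n)%nat -> F k = 0.
Proof. intros H1 H2 k Hk. pose proof (sum_upto_term F n k Hk H1). pose proof (H1 k Hk). lra. Qed.

Lemma block_krivine m (g : nat -> fn) (Il Jl : nat -> Prop) (F : fn) :
  (forall j, Jl j -> (j < m)%nat) -> (forall j, Jl j -> poly_in Il (g j)) ->
  (forall P, poly_in Il P -> alg_gen (fun q => exists j, Jl j /\ q = g j) P) -> poly_in Il F ->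
  (forall x, (forall j, Jl j -> 0 <= g j x <= 1) -> F x > 0) ->
  exists Cl : list ((nat -> nat) * (nat -> nat) * R),
    NoDup (map (fun t => let '(a, b, _) := t in (a, b)) Cl) /\
    (forall a b c, In (a, b, c) Cl -> c > 0 /\ (forall j, (a j <> 0)%nat \/ (b j <> 0)%nat -> Jl j)) /\
    (forall x, F x = lin_comb m g Cl x).
Proof. intros HJ HgI Hgen HF Hpos.
 assert (Hs : forall i, exists P, Il i -> poly_in Jl P /\ forall x, x i = P (fun j => g j x)).
 { intros i. destruct (excluded_middle_informative (Il i)) as [Hi|Hi].
   - destruct (ag_to_pi g Jl (fun x => x i) (Hgen _ (pi_var Il i Hi))) as [P [H1 H2]]. exists P; auto.
   - exists (fun _ => 0); tauto. }
 set (sigma := fun i => proj1_sig (constructive_indefinite_description _ (Hs i))).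
 assert (Hsig : forall i, Il i -> poly_in Jl (sigma i) /\ forall x, x i = sigma i (fun j => g j x)).
 { intros i. unfold sigma. destruct (constructive_indefinite_description _ (Hs i)); simpl; auto. }
 set (phat := fun y => fun i => sigma i y).
 set (A := fun y => F (phat y)).
 assert (HA : poly_in Jl A) by (apply (pi_subst Il Jl F sigma); auto; intros i Hi; apply Hsig; auto).
 set (term := fun j => if excluded_middle_informative (Jl j) then (fun y => (y j - g j (phat y)) ^ 2) else (fun _ : point => 0)).
 set (Rr := fun y => sum_upto (fun j => term j y) m).
 assert (Hterm : forall j y, 0 <= term j y).
 { intros j y. unfold term. destruct (excluded_middle_informative (Jl j)); [apply pow2_ge_0|lra]. }
 assert (HR : poly_in Jl Rr).
 { apply pi_sum_upto. intros j _. unfold term. destruct (excluded_middle_informative (Jl j)) as [Hj|Hj].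
   - apply pi_pow, pi_sub. apply pi_var; auto. apply (pi_subst Il Jl (g j) sigma); auto. intros i Hi; apply Hsig; auto.
   - apply pi_const. }
 assert (Hphat : forall x i, Il i -> phat (fun j => g j x) i = x i).
 { intros x i Hi. unfold phat. symmetry; apply Hsig; auto. }
 assert (HAg : forall x, A (fun j => g j x) = F x).
 { intros x. unfold A. apply (pi_dep Il F HF). apply Hphat. }
 assert (HRg : forall x, Rr (fun j => g j x) = 0).
 { intros x. unfold Rr. rewrite (sum_upto_ext _ (fun _ => 0)). rewrite sum_upto_const; ring.
     intros j _. unfold term. destruct (excluded_middle_informative (Jl j)) as [Hj|Hj]; auto.
     rewrite (pi_dep Il (g j) (HgI j Hj) _ x (Hphat x)). rewrite Rminus_diag; ring. }
 destruct (pi_bounded Jl A HA 1) as [MA HMA].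
 set (cube := fun y : point => forall j, Jl j -> 0 <= y j <= 1).
 assert (Hlam : exists k : nat, forall y, cube y -> A y + (INR k + 1) * Rr y >= / (INR k + 1)).
 { destruct (classic (exists k : nat, forall y, cube y -> A y + (INR k + 1) * Rr y >= / (INR k + 1))) as [H|H]; auto.
   exfalso.
   assert (Hk : forall k : nat, exists y, cube y /\ A y + (INR k + 1) * Rr y < / (INR k + 1)).
   { intros k. apply not_all_not_ex. intros H'. apply H. exists k. intros y Hy.
     specialize (H' y). apply Rnot_lt_ge. intros H2. apply H'; auto. }
   set (ys := fun k => proj1_sig (constructive_indefinite_description _ (Hk k))).
   assert (Hys : forall k, cube (ys k) /\ A (ys k) + (INR k + 1) * Rr (ys k) < / (INR k + 1)).
   { intros k. unfold ys. destruct (constructive_indefinite_description _ (Hk k)); simpl; auto. }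
   destruct (fin_list Jl m HJ) as [Jlist [_ HJl]].
   destruct (bw_list Jlist ys 1) as [phi [ystar [Hphi Hcv]]].
   { intros k i Hi. apply HJl in Hi. destruct (Hys k) as [Hc _]. specialize (Hc i Hi). apply Rabs_le; lra. }
   assert (Hcv' : forall i, Jl i -> Un_cv (fun k => ys (phi k) i) (ystar i)).
   { intros i Hi; apply Hcv, HJl; auto. }
   assert (Hcube : cube ystar).
   { intros j Hj. apply (cv_bounds (fun k => ys (phi k) j)); auto. intros k; apply (Hys (phi k)); auto. }
   assert (Hinv : forall k, 0 < / (INR k + 1)) by (intros k; apply Rinv_0_lt_compat; pose proof (pos_INR k); lra).
   assert (Hinv1 : forall k, / (INR k + 1) <= 1).
   { intros k. pose proof (pos_INR k). rewrite <- Rinv_1. apply Rinv_le_contravar; lra. }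
   assert (HRb : forall k, Rr (ys k) <= (1 + MA) / (INR k + 1)).
   { intros k. destruct (Hys k) as [Hc Hl]. assert (Rabs (A (ys k)) <= MA) by (apply HMA; intros i Hi; specialize (Hc i Hi); apply Rabs_le; lra).
     apply abs_le_inv in H0. pose proof (pos_INR k). specialize (Hinv1 k).
     apply Rmult_le_reg_l with (INR k + 1); [lra|]. unfold Rdiv. rewrite <- Rmult_assoc, (Rmult_comm _ (1 + MA)), Rmult_assoc, Rinv_r by lra. lra. }
   assert (HR0 : Rr ystar <= 0).
   { apply Rle_cv_lim with (Un := fun k => Rr (ys (phi k))) (Vn := fun k => (1 + MA) / (INR (phi k) + 1)).
     - intros k; apply HRb.
     - apply (pi_cont Jl Rr HR); auto.
     - apply (cv_sub (fun k => (1 + MA) / (INR k + 1))); auto. apply cv_inv. }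
   assert (Hzero : forall j, Jl j -> g j (phat ystar) = ystar j).
   { intros j Hj. assert (E := sum_zero_terms (fun j => term j ystar) m (fun k _ => Hterm k ystar) HR0 j (HJ j Hj)).
     simpl in E. unfold term in E. destruct (excluded_middle_informative (Jl j)); [|tauto].
     simpl in E. rewrite Rmult_1_r in E. apply Rmult_integral in E. destruct E; lra. }
   assert (HApos : A ystar > 0).
   { apply Hpos. intros j Hj. rewrite Hzero; auto. }
   assert (HA0 : A ystar <= 0).
   { apply Rle_cv_lim with (Un := fun k => A (ys (phi k))) (Vn := fun k => 1 / (INR (phi k) + 1)).
     - intros k. destruct (Hys (phi k)) as [_ Hl]. pose proof (Hterm 0%nat) as _.
       assert (0 <= Rr (ys (phi k))) by (apply sum_upto_nonneg; intros; apply Hterm).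
       pose proof (pos_INR (phi k)). unfold Rdiv. rewrite Rmult_1_l. nra.
     - apply (pi_cont Jl A HA); auto.
     - apply (cv_sub (fun k => 1 / (INR k + 1))); auto. apply cv_inv. }
   lra. }
 destruct Hlam as [k0 Hk0].
 set (Q := fun y => A y + (INR k0 + 1) * Rr y).
 assert (HQ : poly_in Jl Q) by (apply pi_add; auto; apply pi_scal; auto).
 destruct (cube_rep m Jl Q (/ (INR k0 + 1)) HJ HQ) as [Cl [H1 [H2 H3]]].
 { apply Rinv_0_lt_compat; pose proof (pos_INR k0); lra. }
 { intros y Hy; apply Hk0; auto. }
 exists Cl. split; [auto|split; [auto|]]. intros x. rewrite lin_comb_lsum, <- H3. unfold Q. rewrite HAg, HRg; ring.
Qed.

Lemma sum_upto_mod F d s n : (s < n)%nat ->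
  sum_upto (fun r => if Nat.eq_dec r s then F r - d else F r) n = sum_upto F n - d.
Proof. induction n; intros H; simpl; [lia|]. destruct (Nat.eq_dec n s).
 - subst s. rewrite (sum_upto_ext _ F). ring. intros k Hk; destruct (Nat.eq_dec k n); [lia|auto].
 - rewrite IHn by lia. ring. Qed.

Lemma sum_upto_S F n : sum_upto F (S n) = sum_upto F n + F n.
Proof. reflexivity. Qed.

Section Stage.
Variables (n m p : nat) (g : nat -> fn) (I J : nat -> nat -> Prop).
Hypothesis HIsub : forall l i, (l < p)%nat -> I l i -> (i < n)%nat.
Hypothesis HgI : forall l j, (l < p)%nat -> J l j -> poly_in (I l) (g j).
Hypothesis HRIP : forall l, (l + 1 < p)%nat -> exists s, (s <= l)%nat /\
      forall i, I (l + 1)%nat i -> (exists r, (r <= l)%nat /\ I r i) -> I s i.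
Hypothesis Hcomp : forall l, (l < p)%nat ->
      compact_in (I l) (fun z => forall j, J l j -> 0 <= g j z <= 1).

Definition Kb l (x : point) := forall j, J l j -> 0 <= g j x <= 1.
Definition KS L (x : point) := forall r, (r <= L)%nat -> Kb r x.

Lemma KS_bound L : (L < p)%nat -> exists M, forall r, (r <= L)%nat -> forall x, Kb r x -> forall i, I r i -> Rabs (x i) <= M.
Proof. induction L; intros HL.
 - destruct (Hcomp 0%nat HL) as [[M HM] _]. exists M. intros r Hr x Hx i Hi. replace r with 0%nat in * by lia. apply (HM x); auto.
 - destruct IHL as [M1 H1]; [lia|]. destruct (Hcomp (S L) HL) as [[M2 HM2] _].
   exists (Rmax M1 M2). intros r Hr x Hx i Hi. destruct (Nat.eq_dec r (S L)).
   + subst r. specialize (HM2 x Hx i Hi). pose proof (Rmax_r M1 M2); lra.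
   + specialize (H1 r ltac:(lia) x Hx i Hi). pose proof (Rmax_l M1 M2); lra. Qed.

Lemma stage L : (L < p)%nat -> forall F : nat -> fn, (forall r, (r <= L)%nat -> poly_in (I r) (F r)) ->
  (forall x, KS L x -> sum_upto (fun r => F r x) (S L) > 0) ->
  exists F', (forall r, (r <= L)%nat -> poly_in (I r) (F' r)) /\
    (forall x, sum_upto (fun r => F' r x) (S L) = sum_upto (fun r => F r x) (S L)) /\
    (forall r, (r <= L)%nat -> forall x, Kb r x -> F' r x > 0).
Proof. induction L; intros HL F HF Hpos.
 - exists F. split; [auto|split; [auto|]]. intros r Hr x Hx. assert (r = 0%nat) by lia; subst r.
   assert (KS 0 x) by (intros r' Hr'; replace r' with 0%nat by lia; auto).
   specialize (Hpos x H). simpl in Hpos. lra.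
 - set (U := fun i => exists r, (r <= L)%nat /\ I r i).
   set (V := I (S L)).
   destruct (HRIP L ltac:(lia)) as [s [Hs HsI]]. replace (L + 1)%nat with (S L) in HsI by lia.
   set (A := fun x => sum_upto (fun r => F r x) (S L)).
   assert (HA : poly_in U A).
   { apply pi_sum_upto. intros k Hk. apply (pi_mono (I k)). intros i Hi; exists k; split; [lia|auto]. apply HF; lia. }
   assert (HG : poly_in V (F (S L))) by (apply HF; lia).
   destruct (KS_bound L ltac:(lia)) as [M1 HM1].
   destruct (split_lemma n U V (KS L) (Kb (S L)) A (F (S L))) as [hh [Hh1 [Hh2 Hh3]]].
   + intros i [r [Hr Hi]]. apply (HIsub r); auto; lia.
   + intros i Hi. apply (HIsub (S L)); auto.
   + exact HA.
   + exact HG.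
   + exists M1. intros x Hx i [r [Hr Hi]]. apply (HM1 r Hr x); [apply Hx; auto|auto].
   + destruct (Hcomp (S L) HL) as [[M2 HM2] _]. exists M2. intros x Hx i Hi. apply (HM2 x); auto.
   + intros u x Hu Hcv r Hr. destruct (Hcomp r ltac:(lia)) as [_ Hcl]. intros j Hj. apply (Hcl u x); auto.
     * intros k; apply Hu; auto.
     * intros i Hi; apply Hcv. exists r; auto.
   + intros u x Hu Hcv. destruct (Hcomp (S L) HL) as [_ Hcl]. intros j Hj. apply (Hcl u x); auto.
   + intros x x' Hx Hx' Hag.
     set (z := fun i => if excluded_middle_informative (V i) then x' i else x i).
     assert (ZU : forall i, U i -> z i = x i).
     { intros i Hi. unfold z. destruct (excluded_middle_informative (V i)); auto. symmetry; apply Hag; auto. }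
     assert (ZV : forall i, V i -> z i = x' i).
     { intros i Hi. unfold z. destruct (excluded_middle_informative (V i)); tauto. }
     assert (Hz : KS (S L) z).
     { intros r Hr j Hj. destruct (Nat.eq_dec r (S L)).
       - subst r. rewrite (pi_dep (I (S L)) (g j) (HgI (S L) j HL Hj) z x'); auto.
       - rewrite (pi_dep (I r) (g j) (HgI r j ltac:(lia) Hj) z x). apply (Hx r); auto; lia.
         intros i Hi; apply ZU. exists r; split; [lia|auto]. }
     specialize (Hpos z Hz). change (sum_upto (fun r => F r z) (S L) + F (S L) z > 0) in Hpos.
     rewrite (pi_dep V (F (S L)) HG z x') in Hpos by auto.
     assert (EA : A z = A x) by (apply (pi_dep U A HA); auto). unfold A in *. lra.
   + set (F2 := fun r => if Nat.eq_dec r s then (fun x => F s x - hh x) else F r).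
     destruct (IHL ltac:(lia) F2) as [F' [H1 [H2 H3]]].
     * intros r Hr. unfold F2. destruct (Nat.eq_dec r s).
       -- subst r. apply pi_sub; [apply HF; lia|]. apply (pi_mono (fun i => U i /\ V i)); auto.
          intros i [Hu Hv]. apply HsI; auto.
       -- apply HF; lia.
     * intros x Hx. unfold F2.
       rewrite (sum_upto_ext _ (fun r => if Nat.eq_dec r s then F r x - hh x else F r x)).
       rewrite sum_upto_mod by lia. specialize (Hh2 x Hx). unfold A in Hh2. lra.
       intros k _. destruct (Nat.eq_dec k s); [subst; auto|auto].
     * exists (fun r => if Nat.eq_dec r (S L) then (fun x => F (S L) x + hh x) else F' r).
       split; [|split].
       -- intros r Hr. destruct (Nat.eq_dec r (S L)).
          ++ subst r. apply pi_add; [apply HF; lia|]. apply (pi_mono (fun i => U i /\ V i)); auto. intros i [_ Hv]; auto.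
          ++ apply H1; lia.
       -- intros x. rewrite (sum_upto_S (fun r => F r x) (S L)), sum_upto_S. destruct (Nat.eq_dec (S L) (S L)); [|lia].
          rewrite (sum_upto_ext _ (fun r => F' r x)). rewrite H2. unfold F2.
          rewrite (sum_upto_ext _ (fun r => if Nat.eq_dec r s then F r x - hh x else F r x)).
          rewrite sum_upto_mod by lia. ring.
          intros k _. destruct (Nat.eq_dec k s); [subst; auto|auto].
          intros k Hk. destruct (Nat.eq_dec k (S L)); [lia|auto].
       -- intros r Hr x Hx. destruct (Nat.eq_dec r (S L)).
          ++ subst r. apply Hh3; auto.
          ++ apply H3; auto; lia.
Qed.
End Stage.
Theorem mainTheorem1
  (n m p : nat) (f : fn) (g : nat -> fn)
  (I J : nat -> nat -> Prop)
  (* f, g_j in R[x] *)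
  (Hf : poly_in (fun i => (i < n)%nat) f)
  (Hg : forall j, (j < m)%nat -> poly_in (fun i => (i < n)%nat) (g j))
  (* Sparsity Assumption *)
  (Hp : (1 <= p)%nat)
  (HIsub : forall l i, (l < p)%nat -> I l i -> (i < n)%nat)
  (HJsub : forall l j, (l < p)%nat -> J l j -> (j < m)%nat)
  (Hfdec : exists F : nat -> fn,
      (forall l, (l < p)%nat -> poly_in (I l) (F l)) /\
      forall x, f x = sum_upto (fun l => F l x) p)
  (HgI : forall l j, (l < p)%nat -> J l j -> poly_in (I l) (g j))
  (HIcov : forall i, (i < n)%nat -> exists l, (l < p)%nat /\ I l i)
  (HJcov : forall j, (j < m)%nat -> exists l, (l < p)%nat /\ J l j)
  (HRIP : forall l, (l + 1 < p)%nat -> exists s, (s <= l)%nat /\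
      forall i, I (l + 1)%nat i -> (exists r, (r <= l)%nat /\ I r i) -> I s i)
  (* Compactness/Generation Assumption (a) *)
  (Hcomp : forall l, (l < p)%nat ->
      compact_in (I l) (fun z => forall j, J l j -> 0 <= g j z <= 1))
  (Hgen : forall l, (l < p)%nat -> forall P : fn,
      poly_in (I l) P <-> alg_gen (fun q => exists j, J l j /\ q = g j) P)
  (* positivity on K *)
  (Hpos : forall x : point, (forall j, (j < m)%nat -> 0 <= g j x <= 1) -> f x > 0) :
  exists (F : nat -> fn)
         (C : nat -> list ((nat -> nat) * (nat -> nat) * R)),
    (forall l, (l < p)%nat -> poly_in (I l) (F l)) /\
    (forall x, f x = sum_upto (fun l => F l x) p) /\
    (forall l, (l < p)%nat ->
       NoDup (map (fun t => let '(a, b, _) := t in (a, b)) (C l)) /\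
       (forall a b c, In (a, b, c) (C l) ->
          c > 0 /\ (forall j, (a j <> 0)%nat \/ (b j <> 0)%nat -> J l j)) /\
       (forall x, F l x = lin_comb m g (C l) x)).
Proof.
 destruct Hfdec as [F0 [HF0 Hf0]].
 destruct (stage n p g I J HIsub HgI HRIP Hcomp (p - 1) ltac:(lia) F0) as [F' [H1 [H2 H3]]].
 - intros r Hr; apply HF0; lia.
 - intros x Hx. replace (S (p - 1)) with p by lia. rewrite <- Hf0. apply Hpos. intros j Hj.
   destruct (HJcov j Hj) as [l [Hl Hjl]]. apply (Hx l); auto; lia.
 - assert (HC : forall l, exists Cl, (l < p)%nat ->
       NoDup (map (fun t => let '(a, b, _) := t in (a, b)) Cl) /\
       (forall a b c, In (a, b, c) Cl -> c > 0 /\ (forall j, (a j <> 0)%nat \/ (b j <> 0)%nat -> J l j)) /\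
       (forall x, F' l x = lin_comb m g Cl x)).
   { intros l. destruct (Nat.lt_ge_cases l p) as [Hl|Hl].
     - destruct (block_krivine m g (I l) (J l) (F' l)) as [Cl HCl].
       + intros j Hj; apply (HJsub l); auto.
       + intros j Hj; apply (HgI l); auto.
       + intros P HP; apply (Hgen l Hl); auto.
       + apply H1; lia.
       + intros x Hx; apply (H3 l); [lia|exact Hx].
       + exists Cl; auto.
     - exists nil; intros; lia. }
   exists F', (fun l => proj1_sig (constructive_indefinite_description _ (HC l))). split; [|split].
   + intros l Hl; apply H1; lia.
   + intros x. rewrite Hf0. replace p with (S (p - 1)) by lia. symmetry; apply H2.
   + intros l Hl. destruct (constructive_indefinite_description _ (HC l)); simpl; auto.
Qed.
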